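(* Let $\phi\in\mathcal{BF}$ and set $\beta:=-\omega_0^{\phi'}$. Assume that the L\'evy measure of $\phi$ has a density $\mu:(0,\infty)\to(0,\infty)$ such that $t\mapsto e^{\beta t}\mu(t)$ is non-increasing, and let $\phi_e$ be the extension of $\phi$ to $(-\beta,\infty)$. (i) There is a constant $c_1>0$ such that $\mu(t)\le -c_1 t^{-3}\phi_e''(t^{-1}-\beta)e^{-\beta t}$ for all $t>0$. (ii) If there exist constants $\theta>0$, $0\le\Lambda_1<\Lambda_2\le\infty$ and $\gamma>0$ such that \[ \frac{\phi_e''(\lambda x-\beta)}{\phi_e''(\lambda-\beta)}\le\theta x^{-\gamma}\quad\text{for all } x\ge1,\ \lambda\in(\Lambda_1,\Lambda_2), \] then there exist constants $c_2>0$ and $\delta\in(0,1)$ such that $\mu(t)\ge -c_2 t^{-3}\phi_e''(t^{-1}-\beta)e^{-\beta t}$ for all $t\in(\delta\Lambda_2^{-1},\delta\Lambda_1^{-1})$ (conventions $1/0=\infty$, $1/\infty=0$).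
   Context: A function $\phi:(0,\infty)\to[0,\infty)$ is a Bernstein function, $\phi\in\mathcal{BF}$, if it is $C^\infty$ and $(-1)^{n-1}\phi^{(n)}(\lambda)\ge0$ for all $n\in\mathbb{N}$, $\lambda>0$. Every $\phi\in\mathcal{BF}$ has a unique representation $\phi(\lambda)=a+b\lambda+\int_{(0,\infty)}(1-e^{-\lambda t})\mu(dt)$ with $a,b\ge0$ and a measure $\mu$ on $(0,\infty)$ with $\int(1\wedge t)\mu(dt)<\infty$, called the L\'evy measure of $\phi$. Then $\phi'$ is completely monotone ($C^\infty$ with $(-1)^n(\phi')^{(n)}\ge0$). For a completely monotone $f$ with $f^{(n)}(0+):=\lim_{\lambda\to0+}f^{(n)}(\lambda)\in[-\infty,\infty]$: if all $f^{(n)}(0+)$ are finite, $\omega_0^f:=\inf\{\lambda\in\mathbb{R}:\sum_{n\ge0}\frac{f^{(n)}(0+)}{n!}\lambda^n\text{ converges}\}$, otherwise $\omega_0^f:=0$. With $\beta:=-\omega_0^{\phi'}\in[0,\infty]$, the extension $\phi_e:(-\beta,\infty)\to\mathbb{R}$ is $\phi_e=\phi$ on $(0,\infty)$ and, if $\beta>0$, $\phi_e(\lambda)=\sum_{n\ge0}\frac{\phi^{(n)}(0+)}{n!}\lambda^n$ for $\lambda\in(-\beta,0]$ (all $\phi^{(n)}(0+):=\lim_{\lambda\to0+}\phi^{(n)}(\lambda)$ are then finite); $\phi_e$ is $C^\infty$ on $(-\beta,\infty)$. *)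

(* Defs.v *)
From Stdlib Require Import Reals Lra Arith Factorial.
Open Scope R_scope.

Definition lim_right0 (g : R -> R) (L : R) : Prop :=
  forall eps, eps > 0 -> exists del, del > 0 /\
    forall x, 0 < x < del -> Rabs (g x - L) < eps.

Definition deriv_seq (phi : R -> R) (D : nat -> R -> R) : Prop :=
  (forall x, 0 < x -> D 0%nat x = phi x) /\
  (forall n x, 0 < x -> derivable_pt_lim (D n) x (D (S n) x)).

Definition bernstein (phi : R -> R) : Prop :=
  exists D, deriv_seq phi D /\
    (forall x, 0 < x -> 0 <= phi x) /\
    (forall n x, 0 < x -> 0 <= (-1) ^ n * D (S n) x).

Definition improper_int0inf (f : R -> R) (l : R) : Prop :=
  (forall a b, 0 < a -> a <= b -> inhabited (Riemann_integrable f a b)) /\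
  (forall eps, eps > 0 -> exists del M, 0 < del <= M /\
     forall a b (pr : Riemann_integrable f a b),
       0 < a < del -> M < b -> Rabs (RiemannInt pr - l) < eps).

Definition pser_conv (c : nat -> R) (lam : R) : Prop :=
  exists l, infinite_sum (fun n => c n / INR (fact n) * lam ^ n) l.

(* beta = - omega_0^{phi'} where phi' has derivatives D (S n);
   f^(n)(0+) = lim_{0+} D (S n) *)
Definition beta_spec (D : nat -> R -> R) (beta : R) : Prop :=
  (exists c : nat -> R, (forall n, lim_right0 (D (S n)) (c n)) /\
     (forall lam, pser_conv c lam -> - beta <= lam) /\
     (forall m, (forall lam, pser_conv c lam -> m <= lam) -> m <= - beta))
  \/
  ((~ exists c : nat -> R, forall n, lim_right0 (D (S n)) (c n)) /\ beta = 0).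

Definition extension (phi : R -> R) (D : nat -> R -> R) (beta : R)
    (phie : R -> R) : Prop :=
  (forall lam, 0 < lam -> phie lam = phi lam) /\
  (forall lam, - beta < lam <= 0 ->
     exists a : nat -> R, (forall n, lim_right0 (D n) (a n)) /\
       infinite_sum (fun n => a n / INR (fact n) * lam ^ n) (phie lam)).

(* Lambda2 in (0, oo]: None encodes +oo *)
Definition lt_ext (x : R) (L : option R) : Prop :=
  match L with Some l => x < l | None => True end.

(* Main.v *)
Require Import Defs.
From Stdlib Require Import Reals Lra Lia ZArith ClassicalEpsilon Classical FunctionalExtensionality.
From Coquelicot Require Import Coquelicot.
Open Scope R_scope.


Lemma UA (F : R -> R) a b : a <= b ->
  (forall eta, 0 < eta -> exists H, ex_RInt H a b /\
     forall t, a <= t <= b -> Rabs (F t - H t) <= eta) ->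
  ex_RInt F a b.
Proof.
  intros hab HU. apply ex_RInt_Reals_1. intro eps.
  set (eta := eps / (2 * (b - a + 1))).
  assert (heta : 0 < eta). { unfold eta. destruct eps as [e he]; simpl. apply Rdiv_lt_0_compat; lra. }
  destruct (constructive_indefinite_description _ (HU eta heta)) as [H [HH HB]].
  apply ex_RInt_Reals_0 in HH.
  assert (he2 : 0 < eps / 2) by (destruct eps; simpl; lra).
  destruct (HH (mkposreal _ he2)) as [phi [psi [Hp Hi]]].
  exists phi.
  exists (mkStepFun (StepFun_P28 1 psi (mkStepFun (StepFun_P4 a b eta)))).
  split.
  - intros t Ht. simpl. unfold fct_cte.
    rewrite Rmin_left, Rmax_right in Ht by lra.
    specialize (Hp t). rewrite Rmin_left, Rmax_right in Hp by lra.
    specialize (Hp Ht). specialize (HB t Ht).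
    replace (F t - phi t) with ((F t - H t) + (H t - phi t)) by ring.
    eapply Rle_trans. apply Rabs_triang. lra.
  - rewrite StepFun_P30. rewrite StepFun_P18. simpl in Hi.
    eapply Rle_lt_trans. apply Rabs_triang.
    rewrite Rabs_mult, Rabs_R1, (Rabs_right (eta * (b-a))).
    2:{ apply Rle_ge, Rmult_le_pos; lra. }
    assert (eta * (b - a) <= eps/2).
    { unfold eta. destruct eps as [e he]; simpl.
      apply Rle_trans with (e / (2 * (b - a + 1)) * (b - a + 1)).
      apply Rmult_le_compat_l. apply Rlt_le, Rdiv_lt_0_compat; lra. lra.
      right. field. lra. }
    lra.
Qed.
Lemma exR_add (f g : R -> R) a b : ex_RInt f a b -> ex_RInt g a b -> ex_RInt (fun t => f t + g t) a b.
Proof. intros. apply (ex_RInt_plus f g); auto. Qed.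
Lemma exR_scal (f : R -> R) a b c : ex_RInt f a b -> ex_RInt (fun t => c * f t) a b.
Proof. intros. apply (ex_RInt_scal f a b c); auto. Qed.
Lemma RI_add (f g : R -> R) a b : ex_RInt f a b -> ex_RInt g a b -> RInt (fun t => f t + g t) a b = RInt f a b + RInt g a b.
Proof. intros. apply (RInt_plus f g); auto. Qed.
Lemma RI_scal (f : R -> R) a b c : ex_RInt f a b -> RInt (fun t => c * f t) a b = c * RInt f a b.
Proof. intros. apply (RInt_scal f a b c); auto. Qed.
Lemma RI_chasles (f : R -> R) a b c : ex_RInt f a b -> ex_RInt f b c -> RInt f a b + RInt f b c = RInt f a c.
Proof. intros. apply (RInt_Chasles f a b c); auto. Qed.
Lemma RI_const a b c : RInt (fun _ => c) a b = c * (b - a).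
Proof. rewrite RInt_const. unfold scal; simpl; unfold mult; simpl. ring. Qed.

Lemma exR_ch1 (f : R -> R) a b c : a <= b <= c -> ex_RInt f a c -> ex_RInt f a b.
Proof. intros; apply (@ex_RInt_Chasles_1 R_CompleteNormedModule f a b c); auto. Qed.
Lemma exR_ch2 (f : R -> R) a b c : a <= b <= c -> ex_RInt f a c -> ex_RInt f b c.
Proof. intros; apply (@ex_RInt_Chasles_2 R_CompleteNormedModule f a b c); auto. Qed.
Lemma exR_ch (f : R -> R) a b c : ex_RInt f a b -> ex_RInt f b c -> ex_RInt f a c.
Proof. intros; apply (@ex_RInt_Chasles R_NormedModule f a b c); auto. Qed.
Lemma exR_ext (f g : R -> R) a b : (forall x, Rmin a b < x < Rmax a b -> f x = g x) -> ex_RInt f a b -> ex_RInt g a b.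
Proof. intros; apply (@ex_RInt_ext R_NormedModule f g a b); auto. Qed.

Fixpoint stepg (g : R -> R) a d (k : nat) (t : R) : R :=
  match k with
  | O => g a
  | S k' => if Rle_dec (a + INR (S k') * d) t then g (a + INR (S k') * d)
            else stepg g a d k' t
  end.

Lemma stepg_int (g f : R -> R) a b d k : a <= b -> 0 < d -> ex_RInt f a b ->
  ex_RInt (fun t => stepg g a d k t * f t) a b.
Proof.
  intros hab hd hf. induction k as [|k IH].
  - simpl. apply exR_ext with (fun t => g a * f t).
    intros; simpl; reflexivity. apply exR_scal; auto.
  - set (c := a + INR (S k) * d).
    destruct (Rle_lt_dec b c) as [hbc|hcb].
    + apply exR_ext with (fun t => stepg g a d k t * f t); auto.
      intros x Hx. rewrite Rmin_left, Rmax_right in Hx by lra. change (stepg g a d (S k) x) with (if Rle_dec c x then g c else stepg g a d k x).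
      destruct (Rle_dec c x); [lra|reflexivity].
    + destruct (Rle_lt_dec c a) as [hca|hac].
      * apply exR_ext with (fun t => g c * f t). 2: apply exR_scal; auto.
        intros x Hx. rewrite Rmin_left, Rmax_right in Hx by lra. change (stepg g a d (S k) x) with (if Rle_dec c x then g c else stepg g a d k x).
        destruct (Rle_dec c x); [reflexivity|lra].
      * apply exR_ch with c.
        -- apply exR_ext with (fun t => stepg g a d k t * f t).
           intros x Hx. rewrite Rmin_left, Rmax_right in Hx by lra. change (stepg g a d (S k) x) with (if Rle_dec c x then g c else stepg g a d k x).
           destruct (Rle_dec c x); [lra|reflexivity].
           apply exR_ch1 with b. lra. auto.
        -- apply exR_ext with (fun t => g c * f t).
           intros x Hx. rewrite Rmin_left, Rmax_right in Hx by lra. change (stepg g a d (S k) x) with (if Rle_dec c x then g c else stepg g a d k x).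
           destruct (Rle_dec c x); [reflexivity|lra].
           apply exR_scal. apply exR_ch2 with a. lra. auto.
Qed.

Lemma stepg_val g a d k t : 0 < d -> a <= t ->
  exists j, (j <= k)%nat /\ stepg g a d k t = g (a + INR j * d) /\
    a + INR j * d <= t /\ (j = k \/ t < a + INR (S j) * d).
Proof.
  intros hd hat. induction k as [|k IH].
  - exists O. split; [lia|]. split; [simpl; f_equal; ring|]. split; [simpl; lra|]. auto.
  - change (stepg g a d (S k) t) with (if Rle_dec (a + INR (S k) * d) t then g (a + INR (S k) * d) else stepg g a d k t). destruct (Rle_dec (a + INR (S k) * d) t) as [h|h].
    + exists (S k). split; [lia|]. split; [reflexivity|]. split; auto.
    + destruct IH as [j [hj [e [h1 h2]]]]. exists j. split; [lia|]. split; [auto|]. split; [auto|].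
      right. destruct h2 as [->|h2]; [lra|].
      apply Rlt_le_trans with (a + INR (S j) * d); auto.
      apply Rplus_le_compat_l, Rmult_le_compat_r; [lra|]. apply le_INR; lia.
Qed.

Lemma ex_RInt_prod (g f : R -> R) a b B : a < b -> ex_RInt f a b ->
  (forall t, a <= t <= b -> Rabs (f t) <= B) ->
  (forall t, a <= t <= b -> continuity_pt g t) ->
  ex_RInt (fun t => g t * f t) a b.
Proof.
  intros hab hf hB hg.
  assert (hB0 : 0 <= B). { eapply Rle_trans. apply Rabs_pos. apply (hB a). lra. }
  apply UA; [lra|]. intros eta heta.
  assert (he : 0 < eta / (B + 1)) by (apply Rdiv_lt_0_compat; lra).
  destruct (Heine g _ (compact_P3 a b) hg (mkposreal _ he)) as [del Hdel].
  destruct (archimed ((b - a) / del)) as [hup _].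
  set (N := Z.to_nat (up ((b - a) / del))).
  assert (hN : (b - a) / del < INR (S N)).
  { unfold N. rewrite S_INR, INR_IZR_INZ, Z2Nat.id.
    lra. apply le_IZR. apply Rlt_le. eapply Rle_lt_trans; [|exact hup].
    apply Rlt_le, Rdiv_lt_0_compat; [lra|apply cond_pos]. }
  set (d := (b - a) / INR (S N)).
  assert (hd : 0 < d). { unfold d. apply Rdiv_lt_0_compat; [lra|]. apply lt_0_INR; lia. }
  assert (hdd : d < del).
  { assert (hp : 0 < INR (S N)) by (apply lt_0_INR; lia).
    assert (hdl : 0 < del) by apply cond_pos.
    unfold d. apply Rmult_lt_reg_r with (INR (S N)); auto.
    replace ((b - a) / INR (S N) * INR (S N)) with (b - a) by (field; lra).
    replace (b - a) with ((b - a) / del * del) by (field; lra).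
    rewrite (Rmult_comm del). apply Rmult_lt_compat_r; auto. }
  exists (fun t => stepg g a d N t * f t). split.
  - apply stepg_int; auto; lra.
  - intros t Ht. destruct (stepg_val g a d N t hd (proj1 Ht)) as [j [hj [e [h1 h2]]]].
    rewrite e. replace (g t * f t - g (a + INR j * d) * f t) with ((g t - g (a + INR j * d)) * f t) by ring.
    rewrite Rabs_mult.
    assert (hjb : a + INR j * d <= b).
    { apply Rle_trans with (a + INR (S N) * d).
      apply Rplus_le_compat_l, Rmult_le_compat_r; [lra|]. apply le_INR; lia.
      unfold d. right. field. apply not_0_INR; lia. }
    assert (ht2 : t - (a + INR j * d) <= d).
    { destruct h2 as [->|h2].
      - assert (b = a + INR (S N) * d) by (unfold d; field; apply not_0_INR; lia).
        rewrite S_INR in H. lra.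
      - rewrite S_INR in h2. lra. }
    assert (Rabs (g t - g (a + INR j * d)) < eta / (B + 1)).
    { assert (0 <= INR j * d) by (apply Rmult_le_pos; [apply pos_INR|lra]).
      apply (Hdel t). auto. split; lra. rewrite Rabs_right; lra. }
    apply Rle_trans with (eta / (B + 1) * B).
    apply Rmult_le_compat; try apply Rabs_pos; try lra. apply hB; auto.
    apply Rle_trans with (eta / (B+1) * (B+1)). apply Rmult_le_compat_l; lra.
    right; field; lra.
Qed.


Definition impr (f : R -> R) (l : R) : Prop :=
  (forall a b, 0 < a -> a <= b -> ex_RInt f a b) /\
  (forall eps, eps > 0 -> exists del M, 0 < del <= M /\
     forall a b, 0 < a < del -> M < b -> Rabs (RInt f a b - l) < eps).

Lemma impr_iff f l : improper_int0inf f l <-> impr f l.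
Proof.
  split.
  - intros [H1 H2]. split.
    + intros a b ha hab. destruct (H1 a b ha hab) as [pr]. apply ex_RInt_Reals_1; exact pr.
    + intros eps he. destruct (H2 eps he) as [del [M [hd H]]]. exists del, M. split; auto.
      intros a b ha hb. destruct (H1 a b (proj1 ha) ltac:(lra)) as [pr].
      rewrite (RInt_Reals f a b pr). apply H; auto.
  - intros [H1 H2]. split.
    + intros a b ha hab. constructor. apply ex_RInt_Reals_0. auto.
    + intros eps he. destruct (H2 eps he) as [del [M [hd H]]]. exists del, M. split; auto.
      intros a b pr ha hb. rewrite <- (RInt_Reals f a b pr). apply H; auto.
Qed.

Lemma RInt_ge0 (f : R -> R) a b : a <= b -> ex_RInt f a b ->
  (forall x, a < x < b -> 0 <= f x) -> 0 <= RInt f a b.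
Proof.
  intros hab hf hp.
  assert (e : RInt (fun _ => 0) a b = 0) by (rewrite RI_const; apply Rmult_0_l).
  rewrite <- e. apply RInt_le; auto. apply ex_RInt_const.
Qed.

Lemma RInt_mono (f g : R -> R) a b : a <= b -> ex_RInt f a b -> ex_RInt g a b ->
  (forall x, a < x < b -> f x <= g x) -> RInt f a b <= RInt g a b.
Proof. intros; apply RInt_le; auto. Qed.

Lemma impr_ge (f : R -> R) l a b : (forall t, 0 < t -> 0 <= f t) -> impr f l ->
  0 < a -> a <= b -> RInt f a b <= l.
Proof.
  intros hp [H1 H2] ha hab.
  apply Rnot_lt_le; intro hl.
  destruct (H2 (RInt f a b - l) ltac:(lra)) as [del [M [hd H]]].
  set (a' := Rmin (a/2) (del/2)). set (b' := Rmax (b+1) (M+1)).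
  assert (ha' : 0 < a' < del /\ a' <= a).
  { unfold a'. split; [split|]. apply Rmin_glb_lt; lra.
    eapply Rle_lt_trans. apply Rmin_r. lra. eapply Rle_trans. apply Rmin_l. lra. }
  assert (hb' : M < b' /\ b <= b').
  { unfold b'. split. eapply Rlt_le_trans; [|apply Rmax_r]. lra.
    eapply Rle_trans; [|apply Rmax_l]. lra. }
  specialize (H a' b' (proj1 ha') (proj1 hb')).
  assert (e1 : RInt f a' b' = RInt f a' a + RInt f a b + RInt f b b').
  { rewrite RI_chasles. rewrite RI_chasles. auto.
    apply H1; lra. apply H1; lra.
    apply exR_ch1 with b'. lra. apply H1; lra. apply H1; lra. }
  assert (0 <= RInt f a' a). { apply RInt_ge0. lra. apply H1; lra. intros; apply hp; lra. }
  assert (0 <= RInt f b b'). { apply RInt_ge0. lra. apply H1; lra. intros; apply hp; lra. }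
  rewrite e1 in H. apply Rabs_def2 in H. lra.
Qed.

Lemma impr_le (f : R -> R) l K : impr f l ->
  (forall a b, 0 < a -> a <= b -> RInt f a b <= K) -> l <= K.
Proof.
  intros [H1 H2] HK. apply Rnot_lt_le; intro hl.
  destruct (H2 (l - K) ltac:(lra)) as [del [M [hd H]]].
  specialize (H (del/2) (M+1) ltac:(lra) ltac:(lra)).
  specialize (HK (del/2) (M+1) ltac:(lra) ltac:(lra)).
  apply Rabs_def2 in H. lra.
Qed.

Lemma impr_mono (f g : R -> R) l m : impr f l -> impr g m ->
  (forall t, 0 < t -> f t <= g t) -> l <= m.
Proof.
  intros [F1 F2] [G1 G2] hfg. apply Rnot_lt_le; intro hl.
  destruct (F2 ((l - m)/2) ltac:(lra)) as [d1 [M1 [hd1 H1]]].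
  destruct (G2 ((l - m)/2) ltac:(lra)) as [d2 [M2 [hd2 H2]]].
  set (a := Rmin d1 d2 / 2). set (b := Rmax M1 M2 + 1).
  assert (0 < Rmin d1 d2) by (apply Rmin_glb_lt; lra).
  assert (Rmin d1 d2 <= d1) by apply Rmin_l. assert (Rmin d1 d2 <= d2) by apply Rmin_r.
  assert (M1 <= Rmax M1 M2) by apply Rmax_l. assert (M2 <= Rmax M1 M2) by apply Rmax_r.
  specialize (H1 a b ltac:(unfold a; lra) ltac:(unfold b; lra)).
  specialize (H2 a b ltac:(unfold a; lra) ltac:(unfold b; lra)).
  assert (RInt f a b <= RInt g a b).
  { apply RInt_mono. unfold a, b; lra. apply F1; unfold a, b; lra. apply G1; unfold a, b; lra.
    intros; apply hfg; unfold a in *; lra. }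
  apply Rabs_def2 in H1. apply Rabs_def2 in H2. lra.
Qed.

Lemma impr_unique f l m : impr f l -> impr f m -> l = m.
Proof.
  intros H1 H2. apply Rle_antisym; eapply impr_mono; eauto; intros; lra.
Qed.

Lemma impr_plus (f g : R -> R) l m : impr f l -> impr g m -> impr (fun t => f t + g t) (l + m).
Proof.
  intros [F1 F2] [G1 G2]. split.
  - intros. apply exR_add; auto.
  - intros eps he.
    destruct (F2 (eps/2) ltac:(lra)) as [d1 [M1 [hd1 H1]]].
    destruct (G2 (eps/2) ltac:(lra)) as [d2 [M2 [hd2 H2]]].
    exists (Rmin d1 d2), (Rmax M1 M2).
    assert (0 < Rmin d1 d2) by (apply Rmin_glb_lt; lra).
    assert (Rmin d1 d2 <= d1) by apply Rmin_l. assert (Rmin d1 d2 <= d2) by apply Rmin_r.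
    assert (M1 <= Rmax M1 M2) by apply Rmax_l. assert (M2 <= Rmax M1 M2) by apply Rmax_r.
    split. lra. intros a b ha hb.
    rewrite RI_add by (apply F1 || apply G1; lra).
    specialize (H1 a b ltac:(lra) ltac:(lra)). specialize (H2 a b ltac:(lra) ltac:(lra)).
    replace (RInt f a b + RInt g a b - (l + m)) with ((RInt f a b - l) + (RInt g a b - m)) by ring.
    eapply Rle_lt_trans. apply Rabs_triang. lra.
Qed.

Lemma impr_scal (f : R -> R) l c : impr f l -> impr (fun t => c * f t) (c * l).
Proof.
  intros [F1 F2]. split.
  - intros. apply exR_scal; auto.
  - intros eps he.
    destruct (F2 (eps / (Rabs c + 1))) as [d1 [M1 [hd1 H1]]].
    { apply Rdiv_lt_0_compat. lra. pose proof (Rabs_pos c); lra. }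
    exists d1, M1. split; auto. intros a b ha hb.
    rewrite RI_scal by (apply F1; lra).
    replace (c * RInt f a b - c * l) with (c * (RInt f a b - l)) by ring.
    rewrite Rabs_mult. specialize (H1 a b ha hb).
    pose proof (Rabs_pos c).
    apply Rle_lt_trans with ((Rabs c + 1) * Rabs (RInt f a b - l)).
    apply Rmult_le_compat_r; [apply Rabs_pos|lra].
    replace eps with ((Rabs c + 1) * (eps / (Rabs c + 1))) by (field; lra).
    apply Rmult_lt_compat_l; lra.
Qed.

Lemma impr_ext (f g : R -> R) l : (forall t, 0 < t -> f t = g t) -> impr f l -> impr g l.
Proof.
  intros he [F1 F2]. split.
  - intros a b ha hab. apply exR_ext with f; auto.
    intros x hx. apply he. rewrite Rmin_left in hx by lra. lra.
  - intros eps hp. destruct (F2 eps hp) as [d [M [hd H]]]. exists d, M. split; auto.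
    intros a b ha hb. rewrite <- (RInt_ext f g). apply H; auto.
    intros x hx. apply he. rewrite Rmin_left in hx by lra. lra.
Qed.

Lemma impr_sup (f : R -> R) S : (forall t, 0 < t -> 0 <= f t) ->
  (forall a b, 0 < a -> a <= b -> ex_RInt f a b) ->
  (forall a b, 0 < a -> a <= b -> RInt f a b <= S) ->
  (forall eps, eps > 0 -> exists a b, 0 < a <= b /\ S - eps < RInt f a b) ->
  impr f S.
Proof.
  intros hp hi hS happ. split; auto.
  intros eps he. destruct (happ eps he) as [a0 [b0 [hab H]]].
  exists a0, b0. split; auto. intros a b ha hb.
  assert (e1 : RInt f a b = RInt f a a0 + RInt f a0 b0 + RInt f b0 b).
  { rewrite RI_chasles. rewrite RI_chasles. auto.
    apply hi; lra. apply hi; lra.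
    apply exR_ch1 with b. lra. apply hi; lra. apply hi; lra. }
  assert (0 <= RInt f a a0). { apply RInt_ge0. lra. apply hi; lra. intros; apply hp; lra. }
  assert (0 <= RInt f b0 b). { apply RInt_ge0. lra. apply hi; lra. intros; apply hp; lra. }
  specialize (hS a b ltac:(lra) ltac:(lra)).
  apply Rabs_def1; lra.
Qed.

Lemma impr_exists (f : R -> R) K : (forall t, 0 < t -> 0 <= f t) ->
  (forall a b, 0 < a -> a <= b -> ex_RInt f a b) ->
  (forall a b, 0 < a -> a <= b -> RInt f a b <= K) ->
  exists S, impr f S.
Proof.
  intros hp hi hK.
  set (E := fun x => exists a b, 0 < a <= b /\ x = RInt f a b).
  destruct (completeness E) as [S [HS1 HS2]].
  { exists K. intros x [a [b [h ->]]]. apply hK; lra. }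
  { exists (RInt f 1 1). exists 1, 1. split; auto; lra. }
  exists S. apply impr_sup; auto.
  - intros a b ha hab. apply HS1. exists a, b. split; auto.
  - intros eps he. apply NNPP. intro hn. assert (S <= S - eps); [|lra].
    apply HS2. intros x [a [b [h ->]]]. apply Rnot_lt_le. intro hc. apply hn. exists a, b. split; auto.
Qed.

Lemma impr_abs (f g : R -> R) l m : impr f l -> impr g m ->
  (forall t, 0 < t -> Rabs (f t) <= g t) -> Rabs l <= m.
Proof.
  intros hf hg hb. apply Rabs_le. split.
  - assert (-1 * m <= l); [|lra].
    eapply impr_mono. apply impr_scal; eauto. eauto.
    intros t ht. specialize (hb t ht). pose proof (Rle_abs (- f t)). rewrite Rabs_Ropp in H. lra.
  - eapply impr_mono. eauto. eauto.
    intros t ht. specialize (hb t ht). pose proof (Rle_abs (f t)). lra.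
Qed.


Lemma exp_le x y : x <= y -> exp x <= exp y.
Proof. intros [h|h]. left; apply exp_increasing; auto. subst; lra. Qed.

Lemma mvt_bound (f f' : R -> R) y B :
  (forall x, derivable_pt_lim f x (f' x)) ->
  (forall x, Rabs x <= Rabs y -> Rabs (f' x) <= B) ->
  Rabs (f y - f 0) <= Rabs y * B.
Proof.
  intros hd hB. destruct (Rtotal_order y 0) as [hy|[hy|hy]].
  - destruct (MVT_cor2 f f' y 0 hy (fun c _ => hd c)) as [c [e hc]].
    replace (f y - f 0) with (- (f 0 - f y)) by ring. rewrite Rabs_Ropp, e, Rabs_mult.
    rewrite Rmult_comm. rewrite (Rabs_left y) by lra. rewrite Rabs_right by lra.
    replace (0 - y) with (-y) by ring. apply Rmult_le_compat_l. lra. apply hB.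
    rewrite (Rabs_left y) by lra. unfold Rabs; destruct (Rcase_abs c); lra.
  - subst. replace (f 0 - f 0) with 0 by ring. rewrite Rabs_R0, Rmult_0_l. lra.
  - destruct (MVT_cor2 f f' 0 y hy (fun c _ => hd c)) as [c [e hc]].
    rewrite e, Rabs_mult. rewrite Rmult_comm. rewrite (Rabs_right y) by lra.
    rewrite (Rabs_right (y - 0)) by lra.
    replace (y - 0) with y by ring. apply Rmult_le_compat_l. lra. apply hB.
    rewrite (Rabs_right y) by lra. unfold Rabs; destruct (Rcase_abs c); lra.
Qed.

Lemma exp_m1_bound y : Rabs (exp y - 1) <= Rabs y * exp (Rabs y).
Proof.
  replace 1 with (exp 0) by apply exp_0.
  apply mvt_bound with (f' := exp). intros; apply derivable_pt_lim_exp.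
  intros x hx. rewrite Rabs_right by (left; apply exp_pos). apply exp_le.
  apply Rle_trans with (Rabs x). apply Rle_abs. auto.
Qed.

Lemma exp_taylor2_bound y : Rabs (exp y - 1 - y) <= y ^ 2 * exp (Rabs y).
Proof.
  pose (f := fun x => exp x - x). pose (f' := fun x => exp x - 1).
  assert (Rabs (f y - f 0) <= Rabs y * (Rabs y * exp (Rabs y))).
  { apply mvt_bound with f'.
    - intros x. unfold f, f'. apply derivable_pt_lim_minus. apply derivable_pt_lim_exp. apply derivable_pt_lim_id.
    - intros x hx. unfold f'. eapply Rle_trans. apply exp_m1_bound.
      apply Rmult_le_compat; auto using Rabs_pos. left; apply exp_pos. apply exp_le; auto. }
  unfold f in H. rewrite exp_0 in H. replace (exp y - 1 - y) with (exp y - y - (1 - 0)) by ring.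
  replace (y ^ 2 * exp (Rabs y)) with (Rabs y * (Rabs y * exp (Rabs y))).
  auto. rewrite <- Rmult_assoc, <- Rabs_mult. rewrite Rabs_right. ring. nra.
Qed.

Lemma sinh_ge u : 0 <= u -> 2 * u <= exp u - exp (- u).
Proof.
  intros hu. pose proof (exp_ge_taylor u 2 hu) as ht. simpl in ht.
  rewrite exp_Ropp. set (A := exp u) in *.
  assert (hA : 1 + u + u ^ 2 / 2 <= A).
  { replace (1 + u + u^2/2) with (1 / 1 + u * 1 / 1 + u * (u * 1) / (1 + 1)). lra. field. }
  set (s := 1 + u + u ^ 2 / 2) in *.
  assert (hs : 1 <= s) by (unfold s; nra).
  assert (A - / A >= s - / s).
  { assert (/ A <= / s) by (apply Rinv_le_contravar; lra). lra. }
  assert (s - / s - 2 * u = (u^2/2)^2 / s).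
  { unfold s. field. nra. }
  assert (0 <= (u^2/2)^2 / s) by (apply Rdiv_le_0_compat; nra).
  lra.
Qed.

Lemma cosh2_lower x : x ^ 2 <= exp x + exp (- x) - 2.
Proof.
  assert (e : exp x + exp (-x) - 2 = (exp (x/2) - exp (-(x/2))) ^ 2).
  { replace x with (x/2 + x/2) at 1 by field. replace (-x) with (-(x/2) + -(x/2)) by field.
    rewrite !exp_plus.
    assert (exp (x/2) * exp (-(x/2)) = 1).
    { rewrite <- exp_plus. replace (x/2 + -(x/2)) with 0 by ring. apply exp_0. }
    nra. }
  rewrite e. destruct (Rle_lt_dec 0 x).
  - pose proof (sinh_ge (x/2) ltac:(lra)). nra.
  - pose proof (sinh_ge (-(x/2)) ltac:(lra)). rewrite Ropp_involutive in H. nra.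
Qed.

Lemma cosh2_upper x : exp x + exp (- x) - 2 <= x ^ 2 * exp (Rabs x).
Proof.
  assert (e : exp x + exp (-x) - 2 = (exp (x/2) - exp (-(x/2))) ^ 2).
  { replace x with (x/2 + x/2) at 1 by field. replace (-x) with (-(x/2) + -(x/2)) by field.
    rewrite !exp_plus.
    assert (exp (x/2) * exp (-(x/2)) = 1).
    { rewrite <- exp_plus. replace (x/2 + -(x/2)) with 0 by ring. apply exp_0. }
    nra. }
  rewrite e.
  pose (f := fun u => exp u - exp (- u)). pose (f' := fun u => exp u + exp (- u)).
  assert (Rabs (f (x/2) - f 0) <= Rabs (x/2) * (2 * exp (Rabs (x/2)))).
  { apply mvt_bound with f'.
    - intros u. unfold f, f'. replace (exp u + exp (-u)) with (exp u - (exp (-u) * -1)) by ring.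
      apply derivable_pt_lim_minus. apply derivable_pt_lim_exp.
      apply (derivable_pt_lim_comp Ropp exp). apply derivable_pt_lim_opp, derivable_pt_lim_id.
      apply derivable_pt_lim_exp.
    - intros u hu. unfold f'. rewrite Rabs_right by (apply Rle_ge, Rplus_le_le_0_compat; left; apply exp_pos).
      assert (exp u <= exp (Rabs (x/2))) by (apply exp_le; eapply Rle_trans; [apply Rle_abs|auto]).
      assert (exp (-u) <= exp (Rabs (x/2))).
      { apply exp_le. eapply Rle_trans; [|exact hu]. rewrite <- Rabs_Ropp. apply Rle_abs. }
      lra. }
  unfold f in H. rewrite Ropp_0, exp_0 in H. replace (1 - 1) with 0 in H by ring. rewrite Rminus_0_r in H.
  assert (hq : (exp (x/2) - exp (-(x/2))) ^ 2 <= (Rabs (x/2) * (2 * exp (Rabs (x/2)))) ^ 2).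
  { rewrite <- (pow2_abs (exp (x/2) - exp (-(x/2)))). apply pow_incr. split; auto. apply Rabs_pos. }
  eapply Rle_trans. exact hq.
  assert (ea : exp (Rabs (x/2)) ^ 2 = exp (Rabs x)).
  { simpl. rewrite Rmult_1_r, <- exp_plus. f_equal.
    unfold Rdiv. rewrite Rabs_mult, Rabs_inv, (Rabs_right 2) by lra. field. }
  assert (eb : Rabs (x/2) ^ 2 = x ^ 2 / 4).
  { rewrite <- Rsqr_pow2, <- Rsqr_abs, Rsqr_pow2. field. }
  replace ((Rabs (x / 2) * (2 * exp (Rabs (x / 2)))) ^ 2) with (4 * (Rabs (x/2) ^ 2) * (exp (Rabs (x/2)) ^ 2)) by ring.
  rewrite ea, eb. right; field.
Qed.

Lemma SD (F F1 : R -> R) y L r : 0 < r ->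
  (forall x, Rabs (x - y) < r -> derivable_pt_lim F x (F1 x)) ->
  derivable_pt_lim F1 y L ->
  forall eps, 0 < eps -> exists h0, 0 < h0 /\ forall h, 0 < h < h0 ->
    Rabs ((F (y + h) + F (y - h) - 2 * F y) / h ^ 2 - L) <= eps.
Proof.
  intros hr hF hF1 eps he.
  destruct (hF1 (eps/2) ltac:(lra)) as [del hdel].
  exists (Rmin del r). split. apply Rmin_glb_lt; [apply cond_pos|lra].
  intros h [h0 hh].
  assert (hhd : h < del) by (eapply Rlt_le_trans; [exact hh|apply Rmin_l]).
  assert (hhr : h < r) by (eapply Rlt_le_trans; [exact hh|apply Rmin_r]).
  pose (q := fun s => F (y + s) + F (y - s) - 2 * F y - L * s ^ 2).
  pose (q' := fun s => F1 (y + s) - F1 (y - s) - 2 * L * s).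
  assert (hq : forall c, 0 <= c <= h -> derivable_pt_lim q c (q' c)).
  { intros c hc. unfold q, q'.
    replace (F1 (y + c) - F1 (y - c) - 2 * L * c) with
      (F1 (y + c) * 1 + F1 (y - c) * (-1) - 0 - L * (INR 2 * c ^ (2 - 1))) by (simpl; ring).
    apply derivable_pt_lim_minus. apply derivable_pt_lim_minus. apply derivable_pt_lim_plus.
    - apply (derivable_pt_lim_comp (fun s => y + s) F).
      replace 1 with (0 + 1) by ring. apply derivable_pt_lim_plus. apply derivable_pt_lim_const. apply derivable_pt_lim_id.
      apply hF. replace (y + c - y) with c by ring. rewrite Rabs_right; lra.
    - apply (derivable_pt_lim_comp (fun s => y - s) F).
      replace (-1) with (0 - 1) by ring. apply derivable_pt_lim_minus. apply derivable_pt_lim_const. apply derivable_pt_lim_id.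
      apply hF. replace (y - c - y) with (- c) by ring. rewrite Rabs_Ropp, Rabs_right; lra.
    - apply derivable_pt_lim_const.
    - apply derivable_pt_lim_scal. apply derivable_pt_lim_pow. }
  destruct (MVT_cor2 q q' 0 h h0 hq) as [c [e hc]].
  assert (hq0 : q 0 = 0). { unfold q. rewrite Rplus_0_r, Rminus_0_r. ring. }
  assert (hqc : Rabs (q' c) <= eps * c).
  { unfold q'.
    assert (k1 : Rabs ((F1 (y + c) - F1 y) / c - L) < eps / 2).
    { apply hdel. lra. rewrite Rabs_right; lra. }
    assert (k2 : Rabs ((F1 (y + - c) - F1 y) / - c - L) < eps / 2).
    { apply hdel. lra. rewrite Rabs_Ropp, Rabs_right; lra. }
    replace (F1 (y + c) - F1 (y - c) - 2 * L * c) with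
      (c * ((F1 (y + c) - F1 y) / c - L) + c * ((F1 (y + - c) - F1 y) / - c - L)).
    2:{ replace (y + - c) with (y - c) by ring. field. lra. }
    eapply Rle_trans. apply Rabs_triang. rewrite !Rabs_mult, Rabs_right by lra. nra. }
  rewrite hq0, Rminus_0_r, Rminus_0_r in e.
  unfold q in e.
  replace ((F (y + h) + F (y - h) - 2 * F y) / h ^ 2 - L) with (q' c * h / h ^ 2).
  2:{ rewrite <- e. field. lra. }
  unfold Rdiv. rewrite Rabs_mult, Rabs_mult, Rabs_inv, (Rabs_right h) by lra.
  rewrite (Rabs_right (h^2)) by nra.
  apply Rle_trans with (eps * c * h * / h ^ 2).
  apply Rmult_le_compat_r. left; apply Rinv_0_lt_compat; nra. apply Rmult_le_compat_r; lra.
  apply Rle_trans with (eps * h * h * / h ^ 2).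
  apply Rmult_le_compat_r. left; apply Rinv_0_lt_compat; nra. apply Rmult_le_compat_r; [lra|]. apply Rmult_le_compat_l; lra.
  right; field; lra.
Qed.


Lemma exp_range c a b t : a <= t <= b -> exp (c * t) <= exp (c * a) + exp (c * b).
Proof.
  intros h. pose proof (exp_pos (c*a)). pose proof (exp_pos (c*b)).
  destruct (Rle_lt_dec 0 c).
  - assert (exp (c*t) <= exp (c*b)) by (apply exp_le; nra). lra.
  - assert (exp (c*t) <= exp (c*a)) by (apply exp_le; nra). lra.
Qed.

Lemma mu_bound (mu : R -> R) beta a b t :
  (forall s t, 0 < s -> s <= t -> exp (beta * t) * mu t <= exp (beta * s) * mu s) ->
  (forall t, 0 < t -> 0 < mu t) ->
  0 < a -> a <= t <= b ->
  mu t <= exp (beta * a) * mu a * (exp (- beta * a) + exp (- beta * b)).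
Proof.
  intros Hmon Hmu ha ht. pose proof (Hmu t ltac:(lra)).
  pose proof (exp_pos (beta * t)).
  assert (e : mu t = exp (- beta * t) * (exp (beta * t) * mu t)).
  { rewrite <- Rmult_assoc, <- exp_plus. replace (- beta * t + beta * t) with 0 by ring. rewrite exp_0; ring. }
  rewrite e. specialize (Hmon a t ha (proj1 ht)).
  pose proof (exp_range (- beta) a b t ht).
  pose proof (exp_pos (- beta * t)).
  rewrite (Rmult_comm (exp (beta*a) * mu a)).
  apply Rmult_le_compat; try lra. apply Rmult_le_pos; lra.
Qed.

Lemma cont_Rmin_inv t : 0 < t -> continuity_pt (fun s => / Rmin 1 s) t.
Proof.
  intros ht. assert (e : forall s, Rmin 1 s = (1 + s - Rabs (1 - s)) / 2).
  { intros s. unfold Rmin, Rabs. destruct (Rle_dec 1 s), (Rcase_abs (1 - s)); lra. }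
  apply continuity_pt_ext with (fun s => / ((1 + s - Rabs (1 - s)) / 2)).
  intros; rewrite e; auto.
  apply continuity_pt_inv.
  - apply continuity_pt_div. 2: apply continuity_pt_const; intros ? ?; auto. 2: lra.
    apply continuity_pt_minus. apply continuity_pt_plus. apply continuity_pt_const; intros ? ?; auto.
    apply continuity_pt_id.
    apply (continuity_pt_comp (fun s => 1 - s) Rabs). apply continuity_pt_minus.
    apply continuity_pt_const; intros ? ?; auto. apply continuity_pt_id. apply Rcontinuity_abs.
  - rewrite <- e. unfold Rmin; destruct (Rle_dec 1 t); lra.
Qed.

Lemma mu_int (mu : R -> R) beta l0 :
  (forall s t, 0 < s -> s <= t -> exp (beta * t) * mu t <= exp (beta * s) * mu s) ->
  (forall t, 0 < t -> 0 < mu t) ->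
  impr (fun t => Rmin 1 t * mu t) l0 ->
  forall a b, 0 < a -> a <= b -> ex_RInt mu a b.
Proof.
  intros Hmon Hmu [Hi _] a b ha hab.
  destruct hab as [hab|<-]. 2: apply ex_RInt_point.
  apply exR_ext with (fun t => / Rmin 1 t * (Rmin 1 t * mu t)).
  { intros x hx. rewrite Rmin_left in hx by lra. field.
    unfold Rmin; destruct (Rle_dec 1 x); lra. }
  apply ex_RInt_prod with (exp (beta * a) * mu a * (exp (- beta * a) + exp (- beta * b))); auto.
  apply Hi; lra.
  - intros t ht. pose proof (Hmu t ltac:(lra)).
    assert (0 < Rmin 1 t <= 1). { unfold Rmin; destruct (Rle_dec 1 t); lra. }
    rewrite Rabs_right by nra. eapply Rle_trans. 2: apply (mu_bound mu beta a b t); auto.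
    nra.
  - intros t ht. apply cont_Rmin_inv. lra.
Qed.

Lemma cint (mu : R -> R) beta l0 (g : R -> R) :
  (forall s t, 0 < s -> s <= t -> exp (beta * t) * mu t <= exp (beta * s) * mu s) ->
  (forall t, 0 < t -> 0 < mu t) ->
  impr (fun t => Rmin 1 t * mu t) l0 ->
  (forall t, 0 < t -> continuity_pt g t) ->
  forall a b, 0 < a -> a <= b -> ex_RInt (fun t => g t * mu t) a b.
Proof.
  intros Hmon Hmu Hl hg a b ha hab.
  destruct hab as [hab|<-]. 2: apply ex_RInt_point.
  apply ex_RInt_prod with (exp (beta * a) * mu a * (exp (- beta * a) + exp (- beta * b))); auto.
  eapply mu_int; eauto; lra.
  - intros t ht. pose proof (Hmu t ltac:(lra)).
    rewrite Rabs_right by lra. apply (mu_bound mu beta a b t); auto.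
  - intros t ht. apply hg. lra.
Qed.

Lemma ex_or_any (P : R -> Prop) : exists m, (exists m', P m') -> P m.
Proof.
  destruct (classic (exists m', P m')) as [[m hm]|hn].
  - exists m; auto.
  - exists 0; intros h; contradiction.
Qed.

Definition pick (P : R -> Prop) : R :=
  proj1_sig (constructive_indefinite_description _ (ex_or_any P)).

Lemma pick_spec P : (exists m, P m) -> P (pick P).
Proof. unfold pick. destruct (constructive_indefinite_description _ _) as [m hm]. simpl. auto. Qed.

Definition Mk (mu : R -> R) (k : nat) (lam : R) : R :=
  pick (impr (fun t => t ^ k * exp (- (lam * t)) * mu t)).

Lemma sum_ge_last (f : nat -> R) n : (forall i, 0 <= f i) -> f n <= sum_f_R0 f n.
Proof.
  intros hf. destruct n. simpl; lra. simpl. pose proof (cond_pos_sum f n hf). lra.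
Qed.

Lemma bound_pow_exp k lam t : (1 <= k)%nat -> 0 < lam -> 0 < t ->
  t ^ k * exp (- (lam * t)) <= (1 + INR (fact k) / lam ^ k) * Rmin 1 t.
Proof.
  intros hk hl ht.
  assert (hf : 0 <= INR (fact k) / lam ^ k).
  { apply Rdiv_le_0_compat. apply pos_INR. apply pow_lt; auto. }
  destruct (Rle_dec t 1) as [h1|h1].
  - rewrite Rmin_right by lra.
    assert (t ^ k <= t).
    { destruct k. lia. change (t ^ S k) with (t * t ^ k).
      assert (t ^ k <= 1) by (rewrite <- (pow1 k); apply pow_incr; lra). assert (0 <= t ^ k) by (apply pow_le; lra). nra. }
    assert (exp (- (lam * t)) <= 1). { rewrite <- exp_0. apply exp_le. nra. }
    assert (0 <= t ^ k) by (apply pow_le; lra).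
    apply Rle_trans with t. nra. nra.
  - rewrite Rmin_left by lra.
    pose proof (exp_ge_taylor (lam * t) k ltac:(nra)) as hT.
    pose proof (sum_ge_last (fun i => (lam * t) ^ i / INR (fact i)) k) as hL.
    assert (hL' : (lam * t) ^ k / INR (fact k) <= exp (lam * t)).
    { eapply Rle_trans. apply hL. intros i. apply Rdiv_le_0_compat. apply pow_le; nra. apply INR_fact_lt_0. auto. }
    rewrite exp_Ropp. assert (hfk := INR_fact_lt_0 k).
    assert (hp : 0 < (lam * t) ^ k) by (apply pow_lt; nra).
    assert (t ^ k * / exp (lam * t) <= INR (fact k) / lam ^ k).
    { rewrite Rpow_mult_distr in hp, hL'.
      assert (0 < lam ^ k) by (apply pow_lt; auto). assert (0 < t ^ k) by (apply pow_lt; auto).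
      apply Rle_trans with (t ^ k * / (lam ^ k * t ^ k / INR (fact k))).
      apply Rmult_le_compat_l. lra. apply Rinv_le_contravar.
      apply Rdiv_lt_0_compat; auto. auto.
      right. field. lra. }
    lra.
Qed.

Lemma core_bound k lam h t : 0 < lam -> Rabs h <= lam / 2 -> 0 < t ->
  Rabs (t ^ k * exp (- ((lam + h) * t)) - t ^ k * exp (- (lam * t)) + h * (t ^ (S k) * exp (- (lam * t))))
  <= h ^ 2 * (t ^ (S (S k)) * exp (- (lam / 2 * t))).
Proof.
  intros hl hh ht.
  assert (e : t ^ k * exp (- ((lam + h) * t)) - t ^ k * exp (- (lam * t)) + h * (t ^ (S k) * exp (- (lam * t)))
    = t ^ k * exp (- (lam * t)) * (exp (- h * t) - 1 - (- h * t))).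
  { replace (- ((lam + h) * t)) with (- (lam * t) + - h * t) by ring. rewrite exp_plus. simpl. ring. }
  rewrite e, Rabs_mult, Rabs_mult.
  rewrite (Rabs_right (t ^ k)) by (apply Rle_ge, pow_le; lra).
  rewrite (Rabs_right (exp _)) by (left; apply exp_pos).
  pose proof (exp_taylor2_bound (- h * t)) as hb.
  assert (hk : 0 <= t ^ k) by (apply pow_le; lra).
  apply Rle_trans with (t ^ k * exp (- (lam * t)) * ((- h * t) ^ 2 * exp (Rabs (- h * t)))).
  apply Rmult_le_compat_l; auto. apply Rmult_le_pos; auto. left; apply exp_pos.
  assert (ea : exp (- (lam * t)) * exp (Rabs (- h * t)) <= exp (- (lam / 2 * t))).
  { rewrite <- exp_plus. apply exp_le. rewrite Rabs_mult, Rabs_Ropp, (Rabs_right t) by lra.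
    assert (Rabs h * t <= lam / 2 * t) by (apply Rmult_le_compat_r; lra). lra. }
  replace (t ^ k * exp (- (lam * t)) * ((- h * t) ^ 2 * exp (Rabs (- h * t))))
    with (h ^ 2 * t ^ (S (S k)) * (exp (- (lam * t)) * exp (Rabs (- h * t)))) by (simpl; ring).
  rewrite Rmult_assoc. apply Rmult_le_compat_l. nra.
  apply Rmult_le_compat_l. apply pow_le; lra. auto.
Qed.

Lemma deriv_from_bound (F : R -> R) G lam K r : 0 < r ->
  (forall h, h <> 0 -> Rabs h < r -> Rabs (F (lam + h) - F lam - h * G) <= h ^ 2 * K) ->
  derivable_pt_lim F lam G.
Proof.
  intros hr hb eps he.
  assert (hK : 0 <= K).
  { specialize (hb (r/2) ltac:(lra) ltac:(rewrite Rabs_right; lra)).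
    pose proof (Rabs_pos (F (lam + r / 2) - F lam - r / 2 * G)). assert (0 < (r/2)^2) by (apply pow_lt; lra). nra. }
  assert (hd : 0 < Rmin r (eps / (K + 1))).
  { apply Rmin_glb_lt; auto. apply Rdiv_lt_0_compat; lra. }
  exists (mkposreal _ hd). intros h hh0 hh. simpl in hh.
  assert (h1 : Rabs h < r) by (eapply Rlt_le_trans; [exact hh|apply Rmin_l]).
  assert (h2 : Rabs h < eps / (K+1)) by (eapply Rlt_le_trans; [exact hh|apply Rmin_r]).
  specialize (hb h hh0 h1).
  replace ((F (lam + h) - F lam) / h - G) with ((F (lam + h) - F lam - h * G) / h) by (field; auto).
  unfold Rdiv. rewrite Rabs_mult, Rabs_inv.
  assert (0 < Rabs h) by (apply Rabs_pos_lt; auto).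
  apply Rle_lt_trans with (h ^ 2 * K * / Rabs h).
  apply Rmult_le_compat_r; auto. left; apply Rinv_0_lt_compat; auto.
  replace (h ^ 2 * K * / Rabs h) with (Rabs h * K).
  2:{ rewrite <- Rsqr_pow2, Rsqr_abs. unfold Rsqr. field. lra. }
  apply Rle_lt_trans with (Rabs h * (K + 1)). apply Rmult_le_compat_l; lra.
  apply Rlt_le_trans with (eps / (K + 1) * (K + 1)). apply Rmult_lt_compat_r; lra.
  right; field; lra.
Qed.

Definition HypM (mu : R -> R) (beta : R) : Prop :=
  (forall s t, 0 < s -> s <= t -> exp (beta * t) * mu t <= exp (beta * s) * mu s) /\
  (forall t, 0 < t -> 0 < mu t) /\
  exists l0, impr (fun t => Rmin 1 t * mu t) l0.

Lemma cintH mu beta (g : R -> R) : HypM mu beta ->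
  (forall t, 0 < t -> continuity_pt g t) ->
  forall a b, 0 < a -> a <= b -> ex_RInt (fun t => g t * mu t) a b.
Proof. intros [h1 [h2 [l0 h3]]]. eapply cint; eauto. Qed.

Lemma cont_pe k c t : continuity_pt (fun t => t ^ k * exp (c * t)) t.
Proof. reg. Qed.

Lemma Mk_spec mu beta k lam : HypM mu beta -> (1 <= k)%nat -> 0 < lam ->
  impr (fun t => t ^ k * exp (- (lam * t)) * mu t) (Mk mu k lam).
Proof.
  intros H hk hl. pose proof H as [Hmon [Hmu [l0 Hl]]].
  unfold Mk. apply pick_spec.
  set (C := 1 + INR (fact k) / lam ^ k).
  assert (hi : forall a b, 0 < a -> a <= b -> ex_RInt (fun t => t ^ k * exp (- (lam * t)) * mu t) a b).
  { intros a b ha hab. apply (cintH mu beta (fun t => t ^ k * exp (- (lam * t)))); auto.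
    intros t _. apply continuity_pt_ext with (fun t => t ^ k * exp ((- lam) * t)).
    intros; f_equal; f_equal; ring. apply cont_pe. }
  apply impr_exists with (C * l0).
  - intros t ht. pose proof (Hmu t ht). pose proof (exp_pos (- (lam * t))).
    assert (0 <= t ^ k) by (apply pow_le; lra). apply Rmult_le_pos; [apply Rmult_le_pos|]; lra.
  - auto.
  - intros a b ha hab. destruct Hl as [Hl1 Hl2].
    apply Rle_trans with (RInt (fun t => C * (Rmin 1 t * mu t)) a b).
    + apply RInt_mono; auto. apply exR_scal. auto.
      intros x hx. pose proof (Hmu x ltac:(lra)). rewrite <- Rmult_assoc.
      apply Rmult_le_compat_r. lra. apply bound_pow_exp; auto; lra.
    + rewrite RI_scal by auto. apply Rmult_le_compat_l.
      unfold C. assert (0 <= INR (fact k) / lam ^ k). apply Rdiv_le_0_compat. apply pos_INR. apply pow_lt; auto. lra.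
      apply impr_ge; auto. 2: split; auto.
      intros t ht. pose proof (Hmu t ht). assert (0 < Rmin 1 t) by (unfold Rmin; destruct (Rle_dec 1 t); lra). nra.
Qed.

Lemma comb_bound mu k lam h t : 0 < lam -> Rabs h <= lam / 2 -> 0 < t -> 0 <= mu t ->
  Rabs ((t ^ k * exp (- ((lam + h) * t)) * mu t + -1 * (t ^ k * exp (- (lam * t)) * mu t))
        + h * (t ^ (S k) * exp (- (lam * t)) * mu t))
  <= h ^ 2 * (t ^ (S (S k)) * exp (- (lam / 2 * t)) * mu t).
Proof.
  intros hl hh ht hm.
  replace ((t ^ k * exp (- ((lam + h) * t)) * mu t + -1 * (t ^ k * exp (- (lam * t)) * mu t))
        + h * (t ^ (S k) * exp (- (lam * t)) * mu t)) with
    ((t ^ k * exp (- ((lam + h) * t)) - t ^ k * exp (- (lam * t)) + h * (t ^ (S k) * exp (- (lam * t)))) * mu t) by ring.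
  rewrite Rabs_mult, (Rabs_right (mu t)) by lra.
  replace (h ^ 2 * (t ^ (S (S k)) * exp (- (lam / 2 * t)) * mu t)) with
    ((h ^ 2 * (t ^ (S (S k)) * exp (- (lam / 2 * t)))) * mu t) by ring.
  apply Rmult_le_compat_r; auto. apply core_bound; auto.
Qed.

Lemma Mk_deriv mu beta k lam : HypM mu beta -> (1 <= k)%nat -> 0 < lam ->
  derivable_pt_lim (Mk mu k) lam (- Mk mu (S k) lam).
Proof.
  intros H hk hl. pose proof H as [Hmon [Hmu _]].
  apply deriv_from_bound with (K := Mk mu (S (S k)) (lam / 2)) (r := lam / 2). lra.
  intros h hh0 hh.
  assert (hlh : 0 < lam + h) by (pose proof (Rle_abs (- h)); rewrite Rabs_Ropp in H0; lra).
  pose proof (impr_plus _ _ _ _ (impr_plus _ _ _ _ (Mk_spec mu beta k (lam + h) H hk hlh)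
      (impr_scal _ _ (-1) (Mk_spec mu beta k lam H hk hl)))
      (impr_scal _ _ h (Mk_spec mu beta (S k) lam H ltac:(lia) hl))) as HA.
  pose proof (impr_scal _ _ (h ^ 2) (Mk_spec mu beta (S (S k)) (lam / 2) H ltac:(lia) ltac:(lra))) as HB.
  pose proof (impr_abs _ _ _ _ HA HB) as HC.
  replace (Mk mu k (lam + h) - Mk mu k lam - h * - Mk mu (S k) lam) with
    (Mk mu k (lam + h) + -1 * Mk mu k lam + h * Mk mu (S k) lam) by ring.
  apply HC. intros t ht. apply comb_bound; auto. lra. left; auto.
Qed.

Lemma phi_deriv mu beta (phi : R -> R) a b lam : HypM mu beta ->
  (forall lam, 0 < lam -> impr (fun t => (1 - exp (- (lam * t))) * mu t) (phi lam - a - b * lam)) ->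
  0 < lam -> derivable_pt_lim phi lam (b + Mk mu 1 lam).
Proof.
  intros H Hrep hl. pose proof H as [Hmon [Hmu _]].
  set (Phi := fun x => phi x - a - b * x).
  assert (hP : derivable_pt_lim Phi lam (Mk mu 1 lam)).
  { apply deriv_from_bound with (K := Mk mu 2 (lam / 2)) (r := lam / 2). lra.
    intros h hh0 hh.
    assert (hlh : 0 < lam + h) by (pose proof (Rle_abs (- h)); rewrite Rabs_Ropp in H0; lra).
    pose proof (impr_plus _ _ _ _ (impr_plus _ _ _ _ (Hrep (lam + h) hlh)
      (impr_scal _ _ (-1) (Hrep lam hl)))
      (impr_scal _ _ (- h) (Mk_spec mu beta 1 lam H ltac:(lia) hl))) as HA.
    pose proof (impr_scal _ _ (h ^ 2) (Mk_spec mu beta 2 (lam / 2) H ltac:(lia) ltac:(lra))) as HB.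
    pose proof (impr_abs _ _ _ _ HA HB) as HC.
    unfold Phi.
    replace (phi (lam + h) - a - b * (lam + h) - (phi lam - a - b * lam) - h * Mk mu 1 lam) with
      (phi (lam + h) - a - b * (lam + h) + -1 * (phi lam - a - b * lam) + - h * Mk mu 1 lam) by ring.
    apply HC. intros t ht. pose proof (comb_bound mu 0 lam h t hl ltac:(lra) ht ltac:(left; auto)) as hc.
    eapply Rle_trans; [|exact hc]. right.
    rewrite <- Rabs_Ropp. f_equal. simpl. ring. }
  assert (e : phi = fun x => (a + b * x) + Phi x). { apply functional_extensionality. intros x. unfold Phi. ring. }
  rewrite e. replace (b + Mk mu 1 lam) with ((0 + b * 1) + Mk mu 1 lam) by ring.
  apply derivable_pt_lim_plus; auto. apply derivable_pt_lim_plus. apply derivable_pt_lim_const.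
  apply derivable_pt_lim_scal. apply derivable_pt_lim_id.
Qed.

Lemma dpl_loc (f g : R -> R) x l r : 0 < r -> derivable_pt_lim f x l ->
  (forall y, Rabs (y - x) < r -> f y = g y) -> derivable_pt_lim g x l.
Proof.
  intros hr hf he eps hps. destruct (hf eps hps) as [d hd].
  assert (hm : 0 < Rmin d r) by (apply Rmin_glb_lt; [apply cond_pos|auto]).
  exists (mkposreal _ hm). intros h h0 hh. simpl in hh.
  rewrite <- (he (x + h)), <- (he x).
  apply hd; auto. eapply Rlt_le_trans; [exact hh|apply Rmin_l].
  replace (x - x) with 0 by ring. rewrite Rabs_R0; auto.
  replace (x + h - x) with h by ring. eapply Rlt_le_trans; [exact hh|apply Rmin_r].
Qed.

Definition bn (b : R) (n : nat) : R := match n with O => b | _ => 0 end.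

Lemma D_formula mu beta (phi : R -> R) D a b : HypM mu beta ->
  deriv_seq phi D ->
  (forall lam, 0 < lam -> impr (fun t => (1 - exp (- (lam * t))) * mu t) (phi lam - a - b * lam)) ->
  forall n lam, 0 < lam -> D (S n) lam = bn b n + (-1) ^ n * Mk mu (S n) lam.
Proof.
  intros H [HD0 HDS] Hrep n. induction n as [|n IH]; intros lam hl.
  - simpl. apply uniqueness_limite with (f := phi) (x := lam).
    + apply (dpl_loc (D 0%nat) phi lam _ lam); auto.
      intros y hy. apply HD0. apply Rabs_def2 in hy. lra.
    + replace (b + 1 * Mk mu 1 lam) with (b + Mk mu 1 lam) by ring. eapply phi_deriv; eauto.
  - apply uniqueness_limite with (f := fun x => bn b n + (-1) ^ n * Mk mu (S n) x) (x := lam).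
    + apply (dpl_loc (D (S n)) _ lam _ lam); auto.
      intros y hy. apply IH. apply Rabs_def2 in hy. lra.
    + replace (bn b (S n) + (-1) ^ S n * Mk mu (S (S n)) lam) with
        (0 + (-1) ^ n * (- Mk mu (S (S n)) lam)) by (simpl; ring).
      apply derivable_pt_lim_plus. apply derivable_pt_lim_const.
      apply derivable_pt_lim_scal. apply Mk_deriv with beta; auto. lia.
Qed.

Lemma Mk_nonneg mu beta k lam : HypM mu beta -> (1 <= k)%nat -> 0 < lam -> 0 <= Mk mu k lam.
Proof.
  intros H hk hl. pose proof H as [_ [Hmu _]].
  pose proof (Mk_spec mu beta k lam H hk hl) as HM.
  assert (hp : forall t, 0 < t -> 0 <= t ^ k * exp (- (lam * t)) * mu t).
  { intros t ht. pose proof (Hmu t ht). pose proof (exp_pos (- (lam * t))). assert (0 <= t ^ k) by (apply pow_le; lra).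
    apply Rmult_le_pos; [apply Rmult_le_pos|]; lra. }
  pose proof (impr_ge _ _ 1 1 hp HM ltac:(lra) ltac:(lra)) as h.
  rewrite RInt_point in h. exact h.
Qed.

Lemma Mk_decr mu beta k l1 l2 : HypM mu beta -> (1 <= k)%nat -> 0 < l1 -> l1 <= l2 ->
  Mk mu k l2 <= Mk mu k l1.
Proof.
  intros H hk h1 h12. pose proof H as [_ [Hmu _]].
  eapply impr_mono. apply (Mk_spec mu beta k l2); auto; lra. apply (Mk_spec mu beta k l1); auto.
  intros t ht. pose proof (Hmu t ht). assert (0 <= t ^ k) by (apply pow_le; lra).
  apply Rmult_le_compat_r. lra. apply Rmult_le_compat_l. auto. apply exp_le. nra.
Qed.

Lemma moment_lim mu beta k L : HypM mu beta -> (1 <= k)%nat -> lim_right0 (Mk mu k) L ->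
  impr (fun t => t ^ k * mu t) L.
Proof.
  intros H hk hL. pose proof H as [Hmon [Hmu _]].
  assert (hle : forall lam, 0 < lam -> Mk mu k lam <= L).
  { intros lam hl. apply Rnot_lt_le. intro hc.
    destruct (hL (Mk mu k lam - L) ltac:(lra)) as [d [hd hd2]].
    set (l' := Rmin (d/2) lam).
    assert (0 < l' < d /\ l' <= lam).
    { unfold l'. split; [split|]. apply Rmin_glb_lt; lra. eapply Rle_lt_trans. apply Rmin_l. lra. apply Rmin_r. }
    specialize (hd2 l' ltac:(lra)). pose proof (Mk_decr mu beta k l' lam H hk ltac:(lra) ltac:(lra)).
    apply Rabs_def2 in hd2. lra. }
  assert (hL0 : 0 <= L) by (eapply Rle_trans; [apply (Mk_nonneg mu beta k 1)|apply hle]; auto; lra).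
  assert (hi : forall a b, 0 < a -> a <= b -> ex_RInt (fun t => t ^ k * mu t) a b).
  { intros a b ha hab. apply (cintH mu beta (fun t => t ^ k)); auto. intros; reg. }
  apply impr_sup; auto.
  - intros t ht. pose proof (Hmu t ht). assert (0 <= t ^ k) by (apply pow_le; lra). nra.
  - intros a b ha hab. apply Rnot_lt_le. intro hc.
    set (R0 := RInt (fun t => t ^ k * mu t) a b) in *.
    set (lam := (R0 - L) / (2 * b * R0)).
    assert (hlam : 0 < lam) by (unfold lam; apply Rdiv_lt_0_compat; nra).
    pose proof (Mk_spec mu beta k lam H hk hlam) as HM.
    assert (h1 : RInt (fun t => t ^ k * exp (- (lam * t)) * mu t) a b <= L).
    { assert (hp : forall t, 0 < t -> 0 <= t ^ k * exp (- (lam * t)) * mu t).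
      { intros t ht. pose proof (Hmu t ht). pose proof (exp_pos (- (lam * t))). assert (0 <= t ^ k) by (apply pow_le; lra).
        apply Rmult_le_pos; [apply Rmult_le_pos|]; lra. }
      eapply Rle_trans. apply (impr_ge _ _ a b hp HM); auto. apply hle; auto. }
    assert (h2 : RInt (fun t => (1 - lam * b) * (t ^ k * mu t)) a b <= RInt (fun t => t ^ k * exp (- (lam * t)) * mu t) a b).
    { apply RInt_mono; auto. apply exR_scal; auto. apply HM; auto.
      intros x hx. pose proof (Hmu x ltac:(lra)). assert (0 <= x ^ k) by (apply pow_le; lra).
      pose proof (exp_ineq1_le (- (lam * x))).
      assert (1 - lam * b <= exp (- (lam * x))) by nra.
      replace (x ^ k * exp (- (lam * x)) * mu x) with (exp (- (lam * x)) * (x ^ k * mu x)) by ring.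
      apply Rmult_le_compat_r; nra. }
    rewrite RI_scal in h2 by auto. fold R0 in h2.
    assert ((1 - lam * b) * R0 = R0 - (R0 - L) / 2) by (unfold lam; field; nra).
    lra.
  - intros eps he.
    destruct (hL (eps/2) ltac:(lra)) as [d [hd hd2]].
    set (lam := d / 2). specialize (hd2 lam ltac:(unfold lam; lra)).
    pose proof (Mk_spec mu beta k lam H hk ltac:(unfold lam; lra)) as [HM1 HM2].
    destruct (HM2 (eps/2) ltac:(lra)) as [d' [M [hdm HH]]].
    exists (d'/2), (M+1). split. lra.
    specialize (HH (d'/2) (M+1) ltac:(lra) ltac:(lra)).
    apply Rabs_def2 in hd2. apply Rabs_def2 in HH.
    apply Rlt_le_trans with (RInt (fun t => t ^ k * exp (- (lam * t)) * mu t) (d' / 2) (M + 1)). lra.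
    apply RInt_mono. lra. apply HM1; lra. apply hi; lra.
    intros x hx. pose proof (Hmu x ltac:(lra)). assert (0 <= x ^ k) by (apply pow_le; lra).
    assert (exp (- (lam * x)) <= 1) by (rewrite <- exp_0; apply exp_le; unfold lam; nra).
    replace (x ^ k * exp (- (lam * x)) * mu x) with (exp (- (lam * x)) * (x ^ k * mu x)) by ring.
    rewrite <- (Rmult_1_l (x ^ k * mu x)) at 2. apply Rmult_le_compat_r; nra.
Qed.


Definition T (M : nat) (x : R) : R := sum_f_R0 (fun i => / INR (fact i) * x ^ i) M.

Lemma T_cv x : Un_cv (fun M => T M x) (exp x).
Proof.
  unfold T, exp. destruct (exist_exp x) as [l hl]. simpl. unfold exp_in, infinite_sum in hl.
  intros eps he. destruct (hl eps he) as [N hN]. exists N. intros n hn. apply hN; auto.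
Qed.

Lemma T_le_exp x M : 0 <= x -> T M x <= exp x.
Proof.
  intros hx. unfold T. eapply Rle_trans. 2: apply (exp_ge_taylor x M hx).
  right. apply sum_eq. intros i _. unfold Rdiv. ring.
Qed.

Lemma sum_diff_le (f g : nat -> R) M K : (forall n, f n <= g n) ->
  sum_f_R0 f (K + M) - sum_f_R0 f M <= sum_f_R0 g (K + M) - sum_f_R0 g M.
Proof.
  intros hfg. induction K. simpl; lra.
  replace (S K + M)%nat with (S (K + M)) by lia. simpl. specialize (hfg (S (K + M))). lra.
Qed.

Lemma rem_mono x X M : 0 <= x <= X -> exp x - T M x <= exp X - T M X.
Proof.
  intros hx.
  apply Rle_cv_lim with (Un := fun K => T (K + M) x - T M x) (Vn := fun K => T (K + M) X - T M X).
  - intros K. unfold T. apply sum_diff_le. intros n.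
    apply Rmult_le_compat_l. left; apply Rinv_0_lt_compat, INR_fact_lt_0.
    apply pow_incr; lra.
  - intros eps he. destruct (T_cv x eps he) as [N hN]. exists N. intros n hn.
    unfold R_dist. replace (T (n + M) x - T M x - (exp x - T M x)) with (T (n + M) x - exp x) by ring.
    apply hN. lia.
  - intros eps he. destruct (T_cv X eps he) as [N hN]. exists N. intros n hn.
    unfold R_dist. replace (T (n + M) X - T M X - (exp X - T M X)) with (T (n + M) X - exp X) by ring.
    apply hN. lia.
Qed.

Lemma lim_right0_unique g L1 L2 : lim_right0 g L1 -> lim_right0 g L2 -> L1 = L2.
Proof.
  intros h1 h2. apply NNPP. intro hn.
  assert (he : 0 < Rabs (L1 - L2) / 2) by (apply Rdiv_lt_0_compat; [apply Rabs_pos_lt; lra|lra]).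
  destruct (h1 _ he) as [d1 [hd1 H1]]. destruct (h2 _ he) as [d2 [hd2 H2]].
  set (x := Rmin d1 d2 / 2).
  assert (0 < Rmin d1 d2) by (apply Rmin_glb_lt; lra).
  assert (Rmin d1 d2 <= d1) by apply Rmin_l. assert (Rmin d1 d2 <= d2) by apply Rmin_r.
  specialize (H1 x ltac:(unfold x; lra)). specialize (H2 x ltac:(unfold x; lra)).
  assert (Rabs (L1 - L2) <= Rabs (g x - L2) + Rabs (g x - L1)).
  { replace (L1 - L2) with ((g x - L2) - (g x - L1)) by ring.
    eapply Rle_trans. apply Rabs_triang. rewrite Rabs_Ropp. lra. }
  lra.
Qed.

Lemma lim_right0_affine (f g : R -> R) L c d : lim_right0 f L ->
  (forall x, 0 < x -> g x = c * (f x - d)) -> lim_right0 g (c * (L - d)).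
Proof.
  intros hf hg eps he.
  destruct (hf (eps / (Rabs c + 1))) as [del [hd H]].
  { apply Rdiv_lt_0_compat; [lra|]. pose proof (Rabs_pos c); lra. }
  exists del. split; auto. intros x hx. rewrite hg by lra.
  replace (c * (f x - d) - c * (L - d)) with (c * (f x - L)) by ring.
  rewrite Rabs_mult. specialize (H x hx). pose proof (Rabs_pos c).
  apply Rle_lt_trans with ((Rabs c + 1) * Rabs (f x - L)).
  apply Rmult_le_compat_r; [apply Rabs_pos|lra].
  replace eps with ((Rabs c + 1) * (eps / (Rabs c + 1))) by (field; lra).
  apply Rmult_lt_compat_l; lra.
Qed.

Lemma m1sq n : (-1) ^ n * (-1) ^ n = 1.
Proof. induction n. simpl; ring. simpl. replace (-1 * (-1) ^ n * (-1 * (-1) ^ n)) with ((-1) ^ n * (-1) ^ n) by ring. auto. Qed.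

Lemma impr_nonneg_val (f : R -> R) l : (forall t, 0 < t -> 0 <= f t) -> impr f l -> 0 <= l.
Proof.
  intros hp h. pose proof (impr_ge _ _ 1 1 hp h ltac:(lra) ltac:(lra)) as h1.
  rewrite RInt_point in h1. exact h1.
Qed.

Section Dummy. End Dummy.

Lemma moments_from_lims mu beta (phi : R -> R) D a b aseq : HypM mu beta ->
  deriv_seq phi D ->
  (forall lam, 0 < lam -> impr (fun t => (1 - exp (- (lam * t))) * mu t) (phi lam - a - b * lam)) ->
  (forall n, lim_right0 (D n) (aseq n)) ->
  (forall n, impr (fun t => t ^ (S n) * mu t) ((-1) ^ n * (aseq (S n) - bn b n))) /\
  aseq 0%nat = a.
Proof.
  intros H HD Hrep Hlim. pose proof H as [_ [Hmu _]].
  assert (himp : forall n, impr (fun t => t ^ (S n) * mu t) ((-1) ^ n * (aseq (S n) - bn b n))).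
  { intros n. apply moment_lim with beta; auto. lia.
    apply lim_right0_affine with (D (S n)); auto.
    intros x hx. rewrite (D_formula mu beta phi D a b H HD Hrep n x hx).
    replace ((-1) ^ n * (bn b n + (-1) ^ n * Mk mu (S n) x - bn b n)) with
      (((-1) ^ n * (-1) ^ n) * Mk mu (S n) x) by ring. rewrite m1sq; ring. }
  split; auto.
  apply lim_right0_unique with (D 0%nat); auto.
  set (m0 := (-1) ^ 0 * (aseq 1%nat - bn b 0)).
  assert (hm0 : 0 <= m0).
  { apply (impr_nonneg_val _ _ (fun t ht => Rmult_le_pos _ _ (pow_le _ _ (Rlt_le _ _ ht)) (Rlt_le _ _ (Hmu t ht))) (himp 0%nat)). }
  intros eps he. exists (eps / (Rabs b + m0 + 1)). split. apply Rdiv_lt_0_compat; pose proof (Rabs_pos b); lra.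
  intros x [hx0 hx]. destruct HD as [HD0 _]. rewrite HD0 by auto.
  assert (hub : phi x - a - b * x <= x * m0).
  { eapply impr_mono. apply (Hrep x hx0). apply (impr_scal _ _ x (himp 0%nat)).
    intros t ht. pose proof (Hmu t ht). pose proof (exp_ineq1_le (- (x * t))).
    simpl. replace (x * (t * 1 * mu t)) with ((x * t) * mu t) by ring.
    apply Rmult_le_compat_r; lra. }
  assert (hlb : 0 <= phi x - a - b * x).
  { eapply impr_nonneg_val. 2: apply (Hrep x hx0). intros t ht. pose proof (Hmu t ht).
    assert (exp (- (x * t)) <= 1) by (rewrite <- exp_0; apply exp_le; nra). nra. }
  pose proof (Rabs_pos b).
  replace (phi x - a) with ((phi x - a - b * x) + b * x) by ring.
  eapply Rle_lt_trans. apply Rabs_triang. rewrite Rabs_mult, (Rabs_right (phi x - a - b * x)) by lra.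
  rewrite (Rabs_right x) by lra.
  apply Rle_lt_trans with (x * (Rabs b + m0 + 1)). nra.
  replace eps with (eps / (Rabs b + m0 + 1) * (Rabs b + m0 + 1)) by (field; lra).
  apply Rmult_lt_compat_r; lra.
Qed.

Lemma T_S M x : T (S M) x = T M x + / INR (fact (S M)) * x ^ (S M).
Proof. reflexivity. Qed.

Lemma T_ge1 M x : 0 <= x -> 1 <= T M x.
Proof.
  intros hx. induction M. unfold T; simpl; lra.
  rewrite T_S. assert (0 <= / INR (fact (S M)) * x ^ S M).
  { apply Rmult_le_pos. left; apply Rinv_0_lt_compat, INR_fact_lt_0. apply pow_le; auto. }
  lra.
Qed.

Lemma T_cont M r t : continuity_pt (fun t => T M (r * t)) t.
Proof.
  induction M.
  - unfold T; simpl. reg.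
  - apply continuity_pt_ext with (fun t => T M (r * t) + / INR (fact (S M)) * (r * t) ^ S M).
    intros; rewrite T_S; auto.
    apply continuity_pt_plus; auto. reg.
Qed.

Lemma negpow r m : (- r) ^ m = (-1) ^ m * r ^ m.
Proof. replace (- r) with (-1 * r) by ring. apply Rpow_mult_distr. Qed.

Lemma T_S_ M x : T (S M) x = T M x + / INR (fact (S M)) * x ^ (S M).
Proof. reflexivity. Qed.

Lemma ext_rep mu beta (phi : R -> R) D a b z aseq P : HypM mu beta ->
  deriv_seq phi D ->
  (forall lam, 0 < lam -> impr (fun t => (1 - exp (- (lam * t))) * mu t) (phi lam - a - b * lam)) ->
  z < 0 ->
  (forall n, lim_right0 (D n) (aseq n)) ->
  infinite_sum (fun n => aseq n / INR (fact n) * z ^ n) P ->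
  impr (fun t => (1 - exp (- (z * t))) * mu t) (P - a - b * z).
Proof.
  intros H HD Hrep hz Hlim Hsum. pose proof H as [_ [Hmu _]].
  destruct (moments_from_lims mu beta phi D a b aseq H HD Hrep Hlim) as [himp ha0].
  set (mom := fun n => (-1) ^ n * (aseq (S n) - bn b n)) in *.
  set (r := - z).
  assert (hr : 0 < r) by (unfold r; lra).
  assert (has : forall n, aseq (S n) = bn b n + (-1) ^ n * mom n).
  { intros n. unfold mom. replace (bn b n + (-1) ^ n * ((-1) ^ n * (aseq (S n) - bn b n))) with
      (bn b n + ((-1) ^ n * (-1) ^ n) * (aseq (S n) - bn b n)) by ring. rewrite m1sq. ring. }
  set (q := fun n => r ^ (S n) / INR (fact (S n)) * mom n).
  assert (hmom : forall n, 0 <= mom n).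
  { intros n. eapply impr_nonneg_val. 2: apply (himp n). intros t ht. pose proof (Hmu t ht).
    pose proof (pow_le t (S n) ltac:(lra)). nra. }
  assert (hq : forall n, 0 <= q n).
  { intros n. unfold q. apply Rmult_le_pos; auto. apply Rdiv_le_0_compat. apply pow_le; lra. apply INR_fact_lt_0. }
  assert (hsum : forall N, sum_f_R0 (fun n => aseq n / INR (fact n) * z ^ n) (S N) = a - b * r - sum_f_R0 q N).
  { induction N.
    - simpl. rewrite ha0, has. unfold q, r. simpl. field.
    - change (sum_f_R0 (fun n => aseq n / INR (fact n) * z ^ n) (S (S N))) with
        (sum_f_R0 (fun n => aseq n / INR (fact n) * z ^ n) (S N) + aseq (S (S N)) / INR (fact (S (S N))) * z ^ (S (S N))).
      rewrite IHN. change (sum_f_R0 q (S N)) with (sum_f_R0 q N + q (S N)).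
      rewrite has. unfold q. replace z with (- r) by (unfold r; ring). rewrite negpow.
      simpl bn. assert (hf : 0 < INR (fact (S (S N)))) by apply INR_fact_lt_0.
      replace ((-1) ^ S (S N)) with (-1 * (-1) ^ S N) by reflexivity.
      replace ((0 + (-1) ^ S N * mom (S N)) / INR (fact (S (S N))) * (-1 * (-1) ^ S N * r ^ S (S N)))
        with (- (((-1) ^ S N * (-1) ^ S N) * mom (S N) / INR (fact (S (S N))) * r ^ S (S N))) by (field; lra).
      rewrite m1sq. field. lra. }
  set (S0 := a - b * r - P).
  assert (hQ : Un_cv (sum_f_R0 q) S0).
  { intros eps he. destruct (Hsum eps he) as [N0 hN0]. exists N0. intros n hn.
    specialize (hN0 (S n) ltac:(lia)). unfold R_dist in *. rewrite hsum in hN0.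
    unfold S0. replace (sum_f_R0 q n - (a - b * r - P)) with (- (a - b * r - sum_f_R0 q n - P)) by ring.
    rewrite Rabs_Ropp. auto. }
  assert (himpQ : forall N, impr (fun t => (T (S N) (r * t) - 1) * mu t) (sum_f_R0 q N)).
  { induction N.
    - simpl sum_f_R0. apply impr_ext with (fun t => (r ^ 1 / INR (fact 1)) * (t ^ 1 * mu t)).
      intros t ht. unfold T. simpl. field. apply impr_scal. apply (himp 0%nat).
    - change (sum_f_R0 q (S N)) with (sum_f_R0 q N + q (S N)). unfold q at 2.
      apply impr_ext with (fun t => (T (S N) (r * t) - 1) * mu t + (r ^ S (S N) / INR (fact (S (S N)))) * (t ^ S (S N) * mu t)).
      + intros t ht. rewrite (T_S (S N)). rewrite Rpow_mult_distr. field. apply INR_fact_neq_0.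
      + apply impr_plus; auto. replace (r ^ S (S N) / INR (fact (S (S N))) * mom (S N)) with
          ((r ^ S (S N) / INR (fact (S (S N)))) * mom (S N)) by ring. apply impr_scal. apply (himp (S N)). }
  assert (hE : impr (fun t => (exp (r * t) - 1) * mu t) S0).
  { assert (hi : forall a0 b0, 0 < a0 -> a0 <= b0 -> ex_RInt (fun t => (exp (r * t) - 1) * mu t) a0 b0).
    { intros a0 b0 ha hab. apply (cintH mu beta (fun t => exp (r * t) - 1)); auto. intros; reg. }
    assert (hTi : forall N a0 b0, 0 < a0 -> a0 <= b0 -> ex_RInt (fun t => (T (S N) (r * t) - 1) * mu t) a0 b0).
    { intros N a0 b0 ha hab. destruct (himpQ N) as [h1 _]. auto. }
    apply impr_sup; auto.
    - intros t ht. pose proof (Hmu t ht). pose proof (exp_ineq1_le (r * t)). assert (0 < r * t) by nra. nra.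
    - intros a0 b0 ha hab. apply Rnot_lt_le. intro hc.
      set (R1 := RInt (fun t => (exp (r * t) - 1) * mu t) a0 b0) in *.
      set (Rm := RInt mu a0 b0).
      assert (hRm : 0 <= Rm).
      { apply RInt_ge0; auto. destruct H as [Hm1 [Hm2 [l0 Hl0]]]. apply (mu_int mu beta l0 Hm1 Hm2 Hl0); auto.
        intros x hx; left; apply Hmu; lra. }
      set (eps := (R1 - S0) / (Rm + 1)).
      assert (heps : 0 < eps) by (apply Rdiv_lt_0_compat; lra).
      destruct (T_cv (r * b0) eps heps) as [N0 hN0].
      specialize (hN0 (S N0) ltac:(lia)). unfold R_dist in hN0.
      assert (e1 : R1 = RInt (fun t => (T (S N0) (r * t) - 1) * mu t) a0 b0 +
                        RInt (fun t => (exp (r * t) - T (S N0) (r * t)) * mu t) a0 b0).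
      { rewrite <- RI_add. unfold R1. apply RInt_ext. intros x _. cbv beta. match goal with |- ?A = ?B => change (@eq R A B) end. ring. auto.
        apply (cintH mu beta (fun t => exp (r * t) - T (S N0) (r * t))); auto. intros. apply continuity_pt_minus. reg. apply T_cont. }
      assert (h1 : RInt (fun t => (T (S N0) (r * t) - 1) * mu t) a0 b0 <= S0).
      { eapply Rle_trans. apply (impr_ge _ _ a0 b0); auto.
        intros t ht. pose proof (Hmu t ht). apply Rmult_le_pos; [|lra].
        pose proof (T_ge1 (S N0) (r * t) ltac:(nra)). lra.
        apply sum_incr; auto. }
      set (c := exp (r * b0) - T (S N0) (r * b0)).
      assert (h2 : RInt (fun t => (exp (r * t) - T (S N0) (r * t)) * mu t) a0 b0 <= c * Rm).
      { unfold Rm. rewrite <- RI_scal.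
        apply RInt_mono; auto.
        apply (cintH mu beta (fun t => exp (r * t) - T (S N0) (r * t))); auto. intros. apply continuity_pt_minus. reg. apply T_cont.
        apply exR_scal. destruct H as [Hm1 [Hm2 [l0 Hl0]]]. apply (mu_int mu beta l0 Hm1 Hm2 Hl0); auto.
        intros x hx. pose proof (Hmu x ltac:(lra)). apply Rmult_le_compat_r. lra.
        unfold c. apply rem_mono. split; nra.
        destruct H as [Hm1 [Hm2 [l0 Hl0]]]. apply (mu_int mu beta l0 Hm1 Hm2 Hl0); auto. }
      assert (hce : c < eps).
      { unfold c. replace (exp (r * b0) - T (S N0) (r * b0)) with (- (T (S N0) (r * b0) - exp (r * b0))) by ring.
        eapply Rle_lt_trans. apply Rle_abs. rewrite Rabs_Ropp. auto. }
      assert (hc0 : 0 <= c) by (unfold c; pose proof (T_le_exp (r * b0) (S N0) ltac:(nra)); lra).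
      assert (c * Rm <= eps * Rm) by (apply Rmult_le_compat_r; lra).
      assert (eps * Rm < R1 - S0).
      { unfold eps. replace ((R1 - S0) / (Rm + 1) * Rm) with ((R1 - S0) * (Rm / (Rm + 1))) by (field; lra).
        rewrite <- (Rmult_1_r (R1 - S0)) at 2. apply Rmult_lt_compat_l. lra.
        apply (Rmult_lt_reg_r (Rm + 1)). lra. unfold Rdiv. rewrite Rmult_assoc, Rinv_l by lra. lra. }
      lra.
    - intros eps he. destruct (hQ (eps/2) ltac:(lra)) as [N hN]. specialize (hN N ltac:(lia)).
      unfold R_dist in hN. destruct (himpQ N) as [_ H2].
      destruct (H2 (eps/2) ltac:(lra)) as [d [M [hdM HH]]].
      exists (d/2), (M+1). split. lra.
      specialize (HH (d/2) (M+1) ltac:(lra) ltac:(lra)).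
      apply Rabs_def2 in hN. apply Rabs_def2 in HH.
      apply Rlt_le_trans with (RInt (fun t => (T (S N) (r * t) - 1) * mu t) (d / 2) (M + 1)). lra.
      apply RInt_mono. lra. apply hTi; lra. apply hi; lra.
      intros x hx. pose proof (Hmu x ltac:(lra)). apply Rmult_le_compat_r. lra.
      pose proof (T_le_exp (r * x) (S N) ltac:(nra)). lra. }
  apply impr_ext with (fun t => -1 * ((exp (r * t) - 1) * mu t)).
  { intros t ht. unfold r. replace (- (z * t)) with (- z * t) by ring. ring. }
  replace (P - a - b * z) with (-1 * S0) by (unfold S0, r; ring).
  apply impr_scal; auto.
Qed.


Lemma exR_cont (f : R -> R) a b : (forall z, continuity_pt f z) -> ex_RInt f a b.
Proof. intros h. apply (@ex_RInt_continuous R_CompleteNormedModule). intros; apply continuity_pt_filterlim; auto. Qed.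

Lemma series_at0 (c : nat -> R) P : infinite_sum (fun n => c n / INR (fact n) * 0 ^ n) P -> P = c 0%nat.
Proof.
  intros h. apply (uniqueness_sum (fun n => c n / INR (fact n) * 0 ^ n)); auto.
  intros eps he. exists 0%nat. intros n hn. unfold R_dist.
  replace (sum_f_R0 (fun n => c n / INR (fact n) * 0 ^ n) n) with (c 0%nat).
  replace (c 0%nat - c 0%nat) with 0 by ring. rewrite Rabs_R0; lra.
  induction n. simpl. field. simpl. rewrite <- IHn by lia. ring.
Qed.

Lemma rep_all mu beta (phi : R -> R) D a b phie : HypM mu beta ->
  deriv_seq phi D ->
  (forall lam, 0 < lam -> impr (fun t => (1 - exp (- (lam * t))) * mu t) (phi lam - a - b * lam)) ->
  extension phi D beta phie ->
  forall z, - beta < z -> impr (fun t => (1 - exp (- (z * t))) * mu t) (phie z - a - b * z).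
Proof.
  intros H HD Hrep [He1 He2] z hz.
  destruct (Rlt_le_dec 0 z) as [hz0|hz0].
  - rewrite He1 by auto. auto.
  - destruct (He2 z (conj hz hz0)) as [aseq [hlim hs]].
    destruct hz0 as [hz0|hz0].
    + eapply ext_rep; eauto.
    + subst z. apply series_at0 in hs.
      destruct (moments_from_lims mu beta phi D a b aseq H HD Hrep hlim) as [_ ha0].
      rewrite hs, ha0. replace (a - a - b * 0) with (0 * (phi 1 - a - b * 1)) by ring.
      apply impr_ext with (fun t => 0 * ((1 - exp (- (1 * t))) * mu t)).
      intros t _. replace (- (0 * t)) with 0 by ring. rewrite exp_0. ring.
      apply impr_scal. apply Hrep. lra.
Qed.

Definition Setup mu beta (phie phie1 phie2 : R -> R) a b : Prop :=
  HypM mu beta /\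
  (forall z, - beta < z -> impr (fun t => (1 - exp (- (z * t))) * mu t) (phie z - a - b * z)) /\
  (forall x, - beta < x -> derivable_pt_lim phie x (phie1 x)) /\
  (forall x, - beta < x -> derivable_pt_lim phie1 x (phie2 x)).

Definition fh (mu : R -> R) y h t := (exp (- ((y + h) * t)) + exp (- ((y - h) * t)) - 2 * exp (- (y * t))) * mu t.

Lemma d2_rep mu beta phie phie1 phie2 a b y h : Setup mu beta phie phie1 phie2 a b ->
  - beta < y - h -> 0 < h ->
  impr (fh mu y h) (- (phie (y + h) + phie (y - h) - 2 * phie y)).
Proof.
  intros [_ [Hr _]] h1 h2.
  pose proof (impr_scal _ _ (-1) (impr_plus _ _ _ _ (impr_plus _ _ _ _ (Hr (y + h) ltac:(lra)) (Hr (y - h) ltac:(lra)))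
     (impr_scal _ _ (-2) (Hr y ltac:(lra))))) as HA.
  eapply impr_ext. 2: { replace (- (phie (y + h) + phie (y - h) - 2 * phie y)) with
     (-1 * (phie (y + h) - a - b * (y + h) + (phie (y - h) - a - b * (y - h)) + -2 * (phie y - a - b * y))) by ring. exact HA. }
  intros t _. unfold fh. ring.
Qed.

Lemma fh_lower mu y h t : 0 < h -> 0 < t -> 0 <= mu t ->
  t ^ 2 * exp (- (y * t)) * mu t <= / h ^ 2 * fh mu y h t.
Proof.
  intros hh ht hm. unfold fh.
  replace (exp (- ((y + h) * t)) + exp (- ((y - h) * t)) - 2 * exp (- (y * t))) with
    (exp (- (y * t)) * (exp (h * t) + exp (- (h * t)) - 2)).
  2:{ replace (- ((y + h) * t)) with (- (y * t) + - (h * t)) by ring.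
      replace (- ((y - h) * t)) with (- (y * t) + h * t) by ring. rewrite !exp_plus. ring. }
  pose proof (cosh2_lower (h * t)). pose proof (exp_pos (- (y * t))).
  assert (0 < h ^ 2) by (apply pow_lt; lra).
  replace (/ h ^ 2 * (exp (- (y * t)) * (exp (h * t) + exp (- (h * t)) - 2) * mu t)) with
    ((exp (- (y * t)) * mu t) * ((exp (h * t) + exp (- (h * t)) - 2) / h ^ 2)) by (field; lra).
  replace (t ^ 2 * exp (- (y * t)) * mu t) with ((exp (- (y * t)) * mu t) * t ^ 2) by ring.
  apply Rmult_le_compat_l. apply Rmult_le_pos; lra.
  apply (Rmult_le_reg_r (h ^ 2)); auto. unfold Rdiv. rewrite Rmult_assoc, Rinv_l by lra.
  replace ((h * t) ^ 2) with (t ^ 2 * h ^ 2) in H by ring. lra.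
Qed.

Lemma fh_upper mu y h t : 0 < h -> 0 < t -> 0 <= mu t ->
  / h ^ 2 * fh mu y h t <= t ^ 2 * exp (- ((y - h) * t)) * mu t.
Proof.
  intros hh ht hm. unfold fh.
  replace (exp (- ((y + h) * t)) + exp (- ((y - h) * t)) - 2 * exp (- (y * t))) with
    (exp (- (y * t)) * (exp (h * t) + exp (- (h * t)) - 2)).
  2:{ replace (- ((y + h) * t)) with (- (y * t) + - (h * t)) by ring.
      replace (- ((y - h) * t)) with (- (y * t) + h * t) by ring. rewrite !exp_plus. ring. }
  pose proof (cosh2_upper (h * t)). pose proof (exp_pos (- (y * t))).
  rewrite (Rabs_right (h * t)) in H by nra.
  assert (0 < h ^ 2) by (apply pow_lt; lra).
  replace (/ h ^ 2 * (exp (- (y * t)) * (exp (h * t) + exp (- (h * t)) - 2) * mu t)) with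
    ((exp (- (y * t)) * mu t) * ((exp (h * t) + exp (- (h * t)) - 2) / h ^ 2)) by (field; lra).
  replace (t ^ 2 * exp (- ((y - h) * t)) * mu t) with ((exp (- (y * t)) * mu t) * (t ^ 2 * exp (h * t))).
  2:{ replace (- ((y - h) * t)) with (- (y * t) + h * t) by ring. rewrite exp_plus. ring. }
  apply Rmult_le_compat_l. apply Rmult_le_pos; lra.
  apply (Rmult_le_reg_r (h ^ 2)); auto. unfold Rdiv. rewrite Rmult_assoc, Rinv_l by lra.
  replace ((h * t) ^ 2 * exp (h * t)) with (t ^ 2 * exp (h * t) * h ^ 2) in H by ring. lra.
Qed.

Lemma abs_split x e : Rabs x <= e -> - e <= x <= e.
Proof. intros h. pose proof (Rle_abs x). pose proof (Rle_abs (- x)). rewrite Rabs_Ropp in H0. lra. Qed.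

Lemma lowerL mu beta phie phie1 phie2 a b y p q : Setup mu beta phie phie1 phie2 a b ->
  - beta < y -> 0 < p -> p <= q ->
  RInt (fun t => t ^ 2 * exp (- (y * t)) * mu t) p q <= - phie2 y.
Proof.
  intros HS hy hp hpq. pose proof HS as [HM [_ [Hd1 Hd2]]]. pose proof HM as [_ [Hmu _]].
  apply Rnot_lt_le; intro hc.
  set (I := RInt (fun t => t ^ 2 * exp (- (y * t)) * mu t) p q) in *.
  set (eps := (I + phie2 y) / 2).
  destruct (SD phie phie1 y (phie2 y) (y + beta) ltac:(lra)
     (fun x hx => Hd1 x ltac:(apply Rabs_def2 in hx; lra)) (Hd2 y hy) eps ltac:(unfold eps; lra)) as [h0 [hh0 HSD]].
  set (h := Rmin (h0 / 2) ((y + beta) / 2)).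
  assert (hh : 0 < h < h0 /\ h <= (y + beta) / 2).
  { unfold h. split; [split|]. apply Rmin_glb_lt; lra. eapply Rle_lt_trans. apply Rmin_l. lra. apply Rmin_r. }
  specialize (HSD h ltac:(lra)).
  pose proof (impr_scal _ _ (/ h ^ 2) (d2_rep mu beta phie phie1 phie2 a b y h HS ltac:(lra) ltac:(lra))) as HI.
  assert (hpos : forall t, 0 < t -> 0 <= / h ^ 2 * fh mu y h t).
  { intros t ht. eapply Rle_trans. 2: apply fh_lower; try lra. pose proof (Hmu t ht). pose proof (exp_pos (- (y * t))).
    pose proof (pow_le t 2 ltac:(lra)). apply Rmult_le_pos; [apply Rmult_le_pos|]; lra. left; apply Hmu; auto. }
  pose proof (impr_ge _ _ p q hpos HI hp hpq) as h1.
  assert (h2 : I <= RInt (fun t => / h ^ 2 * fh mu y h t) p q).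
  { apply RInt_mono; auto. apply (cintH mu beta (fun t => t ^ 2 * exp (- (y * t)))); auto. intros; reg.
    destruct HI as [HI1 _]. apply HI1; auto.
    intros x hx. apply fh_lower; try lra. left; apply Hmu; lra. }
  assert (e : (phie (y + h) + phie (y - h) - 2 * phie y) / h ^ 2 = / h ^ 2 * (phie (y + h) + phie (y - h) - 2 * phie y)).
  { unfold Rdiv; ring. }
  rewrite e in HSD. apply abs_split in HSD. unfold eps in *. lra.
Qed.

Lemma lowerC mu beta phie phie1 phie2 a b y p q : Setup mu beta phie phie1 phie2 a b ->
  - beta < y -> 0 < p -> p <= q ->
  (q - p) * (p ^ 2 * exp (- ((y + beta) * q)) * (exp (beta * q) * mu q)) <= - phie2 y.
Proof.
  intros HS hy hp hpq. pose proof HS as [HM _]. pose proof HM as [Hmon [Hmu _]].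
  eapply Rle_trans. 2: apply (lowerL mu beta phie phie1 phie2 a b y p q); auto.
  set (C := p ^ 2 * exp (- ((y + beta) * q)) * (exp (beta * q) * mu q)).
  replace ((q - p) * C) with (RInt (fun _ => C) p q) by (rewrite RI_const; apply Rmult_comm).
  apply RInt_mono; auto. apply ex_RInt_const. apply (cintH mu beta (fun t => t ^ 2 * exp (- (y * t)))); auto. intros; reg.
  intros t ht. unfold C.
  assert (e : t ^ 2 * exp (- (y * t)) * mu t = t ^ 2 * exp (- ((y + beta) * t)) * (exp (beta * t) * mu t)).
  { replace (- (y * t)) with (- ((y + beta) * t) + beta * t) by ring. rewrite exp_plus. ring. }
  rewrite e. pose proof (Hmon t q ltac:(lra) ltac:(lra)). pose proof (Hmu q ltac:(lra)).
  pose proof (exp_pos (beta * q)). pose proof (exp_pos (- ((y + beta) * q))).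
  assert (p ^ 2 <= t ^ 2) by (apply pow_incr; lra).
  assert (exp (- ((y + beta) * q)) <= exp (- ((y + beta) * t))) by (apply exp_le; nra).
  assert (0 <= p ^ 2) by (apply pow_le; lra).
  apply Rmult_le_compat; try nra.
Qed.

Lemma int_t2exp c u B : 0 < c -> 0 < u -> u <= B ->
  RInt (fun t => t ^ 2 * exp (- (c * t))) u B <= u ^ 2 / c + 2 * u / c ^ 2 + 2 / c ^ 3.
Proof.
  intros hc hu hB.
  set (F := fun t => - exp (- (c * t)) * (t ^ 2 / c + 2 * t / c ^ 2 + 2 / c ^ 3)).
  assert (hI : is_RInt (fun t => t ^ 2 * exp (- (c * t))) u B (minus (F B) (F u))).
  { apply (is_RInt_derive F). intros x _. unfold F. auto_derive. auto. field. lra.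
    intros x _. apply continuity_pt_filterlim. reg. }
  rewrite (is_RInt_unique _ _ _ _ hI). change (minus (F B) (F u)) with (F B - F u). unfold F.
  pose proof (exp_pos (- (c * B))). pose proof (exp_pos (- (c * u))).
  assert (exp (- (c * u)) <= 1) by (rewrite <- exp_0; apply exp_le; nra).
  assert (0 <= B ^ 2 / c + 2 * B / c ^ 2 + 2 / c ^ 3).
  { assert (0 < c ^ 2) by (apply pow_lt; lra). assert (0 < c ^ 3) by (apply pow_lt; lra).
    assert (0 <= B ^ 2 / c) by (apply Rdiv_le_0_compat; nra). assert (0 <= 2 * B / c ^ 2) by (apply Rdiv_le_0_compat; nra).
    assert (0 <= 2 / c ^ 3) by (apply Rdiv_le_0_compat; nra). lra. }
  assert (0 <= u ^ 2 / c + 2 * u / c ^ 2 + 2 / c ^ 3).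
  { assert (0 < c ^ 2) by (apply pow_lt; lra). assert (0 < c ^ 3) by (apply pow_lt; lra).
    assert (0 <= u ^ 2 / c) by (apply Rdiv_le_0_compat; nra). assert (0 <= 2 * u / c ^ 2) by (apply Rdiv_le_0_compat; nra).
    assert (0 <= 2 / c ^ 3) by (apply Rdiv_le_0_compat; nra). lra. }
  assert (0 <= exp (- (c * B)) * (B ^ 2 / c + 2 * B / c ^ 2 + 2 / c ^ 3)) by (apply Rmult_le_pos; lra).
  assert (exp (- (c * u)) * (u ^ 2 / c + 2 * u / c ^ 2 + 2 / c ^ 3) <= 1 * (u ^ 2 / c + 2 * u / c ^ 2 + 2 / c ^ 3))
    by (apply Rmult_le_compat_r; lra).
  lra.
Qed.

Lemma upper_compact mu beta phie phie1 phie2 a b lam x u h p q :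
  Setup mu beta phie phie1 phie2 a b ->
  0 < lam -> 1 <= x -> 0 < u -> 0 < h -> h <= lam / 2 -> 0 < p -> p <= q ->
  RInt (fun t => / h ^ 2 * fh mu (lam - beta) h t) p q <=
  exp ((lam * (x - 1) + h) * u) * (- phie2 (lam * x - beta)) +
  exp (beta * u) * mu u * (u ^ 2 / (lam - h) + 2 * u / (lam - h) ^ 2 + 2 / (lam - h) ^ 3).
Proof.
  intros HS hl hx hu hh hhl hp hpq. pose proof HS as [HM _]. pose proof HM as [Hmon [Hmu _]].
  set (y := lam - beta). set (g := fun t => / h ^ 2 * fh mu y h t).
  pose proof (impr_scal _ _ (/ h ^ 2) (d2_rep mu beta phie phie1 phie2 a b y h HS ltac:(unfold y; lra) hh)) as [HI1 _].
  assert (gpos : forall t, 0 < t -> 0 <= g t).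
  { intros t ht. unfold g. eapply Rle_trans. 2: apply fh_lower; try lra. pose proof (Hmu t ht). pose proof (exp_pos (- (y * t))).
    pose proof (pow_le t 2 ltac:(lra)). apply Rmult_le_pos; [apply Rmult_le_pos|]; lra. left; apply Hmu; auto. }
  set (p' := Rmin p u). set (q' := Rmax q u).
  assert (hp' : 0 < p' /\ p' <= p /\ p' <= u) by (unfold p', Rmin; destruct (Rle_dec p u); lra).
  assert (hq' : q <= q' /\ u <= q') by (unfold q', Rmax; destruct (Rle_dec q u); lra).
  assert (s1 : RInt g p q <= RInt g p' q').
  { rewrite <- (RI_chasles g p' p q'), <- (RI_chasles g p q q').
    assert (0 <= RInt g p' p) by (apply RInt_ge0; [lra|apply HI1; lra|intros; apply gpos; lra]).
    assert (0 <= RInt g q q') by (apply RInt_ge0; [lra|apply HI1; lra|intros; apply gpos; lra]).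
    lra. apply HI1; lra. apply HI1; lra. apply HI1; lra. apply HI1; lra. }
  rewrite <- (RI_chasles g p' u q') in s1 by (apply HI1; lra).
  set (K := exp ((lam * (x - 1) + h) * u)).
  assert (s2 : RInt g p' u <= K * (- phie2 (lam * x - beta))).
  { eapply Rle_trans. apply (RInt_mono g (fun t => K * (t ^ 2 * exp (- ((lam * x - beta) * t)) * mu t))). lra.
    apply HI1; lra. apply exR_scal. apply (cintH mu beta (fun t => t ^ 2 * exp (- ((lam * x - beta) * t)))); auto; try lra. intros; reg.
    - intros t ht. unfold g. eapply Rle_trans. apply fh_upper; try lra. left; apply Hmu; lra.
      replace (t ^ 2 * exp (- ((y - h) * t)) * mu t) with
        (exp ((lam * (x - 1) + h) * t) * (t ^ 2 * exp (- ((lam * x - beta) * t)) * mu t)).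
      2:{ replace (- ((y - h) * t)) with ((lam * (x - 1) + h) * t + - ((lam * x - beta) * t)) by (unfold y; ring).
          rewrite exp_plus. ring. }
      apply Rmult_le_compat_r. pose proof (Hmu t ltac:(lra)). pose proof (exp_pos (- ((lam * x - beta) * t))).
      pose proof (pow_le t 2 ltac:(lra)). apply Rmult_le_pos; [apply Rmult_le_pos|]; lra.
      unfold K. apply exp_le. apply Rmult_le_compat_l; nra.
    - rewrite RI_scal. apply Rmult_le_compat_l. left; apply exp_pos.
      apply (lowerL mu beta phie phie1 phie2 a b); auto; try lra. nra.
      apply (cintH mu beta (fun t => t ^ 2 * exp (- ((lam * x - beta) * t)))); auto; try lra. intros; reg. }
  assert (s3 : RInt g u q' <= exp (beta * u) * mu u * (u ^ 2 / (lam - h) + 2 * u / (lam - h) ^ 2 + 2 / (lam - h) ^ 3)).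
  { eapply Rle_trans. apply (RInt_mono g (fun t => (exp (beta * u) * mu u) * (t ^ 2 * exp (- ((lam - h) * t))))). lra.
    apply HI1; lra. apply exR_scal. apply exR_cont. intros; reg.
    - intros t ht. unfold g. eapply Rle_trans. apply fh_upper; try lra. left; apply Hmu; lra.
      replace (t ^ 2 * exp (- ((y - h) * t)) * mu t) with
        ((exp (beta * t) * mu t) * (t ^ 2 * exp (- ((lam - h) * t)))).
      2:{ unfold y. replace (- ((lam - beta - h) * t)) with (beta * t + - ((lam - h) * t)) by ring. rewrite exp_plus. ring. }
      apply Rmult_le_compat_r. pose proof (exp_pos (- ((lam - h) * t))). pose proof (pow_le t 2 ltac:(lra)). nra.
      apply Hmon; lra.
    - rewrite RI_scal. apply Rmult_le_compat_l. pose proof (Hmu u hu). pose proof (exp_pos (beta * u)). nra.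
      apply int_t2exp; lra.
      apply exR_cont. intros; reg. }
  fold g. lra.
Qed.

Lemma G_nonneg mu beta phie phie1 phie2 a b y : Setup mu beta phie phie1 phie2 a b ->
  - beta < y -> 0 <= - phie2 y.
Proof.
  intros HS hy. pose proof (lowerL mu beta phie phie1 phie2 a b y 1 1 HS hy ltac:(lra) ltac:(lra)) as h.
  rewrite RInt_point in h. exact h.
Qed.

Lemma inv_c_bound lam h u : 0 < lam -> 0 < h <= lam / 2 -> 0 <= u ->
  u ^ 2 / (lam - h) + 2 * u / (lam - h) ^ 2 + 2 / (lam - h) ^ 3 <=
  2 * u ^ 2 / lam + 8 * u / lam ^ 2 + 16 / lam ^ 3.
Proof.
  intros hl hh hu. set (c := lam - h).
  assert (hc : lam / 2 <= c) by (unfold c; lra).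
  assert (hc0 : 0 < c) by lra.
  assert (i1 : / c <= 2 / lam).
  { replace (2 / lam) with (/ (lam / 2)) by (field; lra). apply Rinv_le_contravar; lra. }
  assert (0 <= / c) by (left; apply Rinv_0_lt_compat; lra).
  assert (i2 : / c ^ 2 <= 4 / lam ^ 2).
  { replace (/ c ^ 2) with ((/ c) ^ 2) by (field; lra). replace (4 / lam ^ 2) with ((2 / lam) ^ 2) by (field; lra). apply pow_incr; lra. }
  assert (i3 : / c ^ 3 <= 8 / lam ^ 3).
  { replace (/ c ^ 3) with ((/ c) ^ 3) by (field; lra). replace (8 / lam ^ 3) with ((2 / lam) ^ 3) by (field; lra). apply pow_incr; lra. }
  assert (0 <= u ^ 2) by (apply pow_le; lra).
  unfold Rdiv. 
  assert (u ^ 2 * / c <= u ^ 2 * (2 / lam)) by (apply Rmult_le_compat_l; lra).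
  assert (2 * u * / c ^ 2 <= 2 * u * (4 / lam ^ 2)) by (apply Rmult_le_compat_l; lra).
  assert (2 * / c ^ 3 <= 2 * (8 / lam ^ 3)) by (apply Rmult_le_compat_l; lra).
  unfold Rdiv in *. lra.
Qed.

Lemma upperU mu beta phie phie1 phie2 a b lam x u : Setup mu beta phie phie1 phie2 a b ->
  0 < lam -> 1 <= x -> 0 < u ->
  - phie2 (lam - beta) <= exp (lam * (x - 1) * u + 1) * (- phie2 (lam * x - beta)) +
    exp (beta * u) * mu u * (2 * u ^ 2 / lam + 8 * u / lam ^ 2 + 16 / lam ^ 3).
Proof.
  intros HS hl hx hu. pose proof HS as [HM [_ [Hd1 Hd2]]]. pose proof HM as [Hmon [Hmu _]].
  apply Rnot_lt_le; intro hc.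
  set (R0 := exp (lam * (x - 1) * u + 1) * (- phie2 (lam * x - beta)) +
    exp (beta * u) * mu u * (2 * u ^ 2 / lam + 8 * u / lam ^ 2 + 16 / lam ^ 3)) in *.
  set (y := lam - beta).
  set (eps := (- phie2 y - R0) / 2).
  destruct (SD phie phie1 y (phie2 y) lam hl
     (fun z hz => Hd1 z ltac:(apply Rabs_def2 in hz; unfold y in hz; lra)) (Hd2 y ltac:(unfold y; lra)) eps ltac:(unfold eps, y in *; lra)) as [h0 [hh0 HSD]].
  set (h := Rmin (h0 / 2) (Rmin (lam / 2) (/ u))).
  assert (hu' : 0 < / u) by (apply Rinv_0_lt_compat; auto).
  assert (hh : 0 < h < h0 /\ h <= lam / 2 /\ h <= / u).
  { unfold h. assert (0 < Rmin (lam / 2) (/ u)) by (apply Rmin_glb_lt; lra).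
    split; [split|split]. apply Rmin_glb_lt; lra. eapply Rle_lt_trans. apply Rmin_l. lra.
    eapply Rle_trans. apply Rmin_r. apply Rmin_l. eapply Rle_trans. apply Rmin_r. apply Rmin_r. }
  specialize (HSD h ltac:(lra)).
  pose proof (impr_scal _ _ (/ h ^ 2) (d2_rep mu beta phie phie1 phie2 a b y h HS ltac:(unfold y; lra) ltac:(lra))) as HI.
  pose proof (impr_le _ _ _ HI (fun p q hp hpq => upper_compact mu beta phie phie1 phie2 a b lam x u h p q HS hl hx hu ltac:(lra) ltac:(lra) hp hpq)) as HB.
  assert (hhu : h * u <= 1).
  { destruct hh as [_ [_ h3]]. apply Rle_trans with (/ u * u). apply Rmult_le_compat_r; lra. right; field; lra. }
  assert (k1 : exp ((lam * (x - 1) + h) * u) * (- phie2 (lam * x - beta)) <= exp (lam * (x - 1) * u + 1) * (- phie2 (lam * x - beta))).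
  { apply Rmult_le_compat_r. apply (G_nonneg mu beta phie phie1 phie2 a b); auto. nra. apply exp_le. nra. }
  assert (k2 : exp (beta * u) * mu u * (u ^ 2 / (lam - h) + 2 * u / (lam - h) ^ 2 + 2 / (lam - h) ^ 3) <=
     exp (beta * u) * mu u * (2 * u ^ 2 / lam + 8 * u / lam ^ 2 + 16 / lam ^ 3)).
  { apply Rmult_le_compat_l. pose proof (Hmu u hu). pose proof (exp_pos (beta * u)). nra.
    apply inv_c_bound; lra. }
  assert (e : (phie (y + h) + phie (y - h) - 2 * phie y) / h ^ 2 = - (/ h ^ 2 * - (phie (y + h) + phie (y - h) - 2 * phie y))).
  { unfold Rdiv; ring. }
  rewrite e in HSD. apply abs_split in HSD. unfold eps in HSD. unfold R0 in *. unfold y in *. lra.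
Qed.


Lemma G_pos mu beta phie phie1 phie2 a b y : Setup mu beta phie phie1 phie2 a b ->
  - beta < y -> 0 < - phie2 y.
Proof.
  intros HS hy. pose proof HS as [[_ [Hmu _]] _].
  eapply Rlt_le_trans. 2: apply (lowerC mu beta phie phie1 phie2 a b y 1 2); auto; lra.
  pose proof (Hmu 2 ltac:(lra)). pose proof (exp_pos (beta * 2)). pose proof (exp_pos (- ((y + beta) * 2))).
  assert (0 < exp (beta * 2) * mu 2) by nra.
  replace ((2 - 1) * (1 ^ 2 * exp (- ((y + beta) * 2)) * (exp (beta * 2) * mu 2))) with
    (exp (- ((y + beta) * 2)) * (exp (beta * 2) * mu 2)) by ring. nra.
Qed.

Lemma part_i mu beta phie phie1 phie2 a b : Setup mu beta phie phie1 phie2 a b ->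
  exists c1, 0 < c1 /\ forall t, 0 < t ->
     mu t <= - c1 * / (t ^ 3) * phie2 (/ t - beta) * exp (- (beta * t)).
Proof.
  intros HS. exists (8 * exp 1). split. pose proof (exp_pos 1); lra.
  intros t ht.
  pose proof (lowerC mu beta phie phie1 phie2 a b (/ t - beta) (t / 2) t HS) as hL.
  assert (hti : 0 < / t) by (apply Rinv_0_lt_compat; auto).
  specialize (hL ltac:(lra) ltac:(lra) ltac:(lra)).
  replace (- ((/ t - beta + beta) * t)) with (-1) in hL by (field; lra).
  set (G := - phie2 (/ t - beta)) in *.
  pose proof (exp_pos 1). pose proof (exp_pos (beta * t)). pose proof (exp_pos (- (beta * t))).
  assert (e1 : exp (-1) = / exp 1) by apply exp_Ropp.
  assert (e2 : exp (- (beta * t)) * exp (beta * t) = 1).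
  { rewrite <- exp_plus. replace (- (beta * t) + beta * t) with 0 by ring. apply exp_0. }
  rewrite e1 in hL.
  assert (t3 : 0 < t ^ 3) by (apply pow_lt; auto).
  replace (- (8 * exp 1) * / t ^ 3 * phie2 (/ t - beta) * exp (- (beta * t))) with
    ((8 * exp 1) * / t ^ 3 * exp (- (beta * t)) * G) by (unfold G; ring).
  assert (hc : 0 <= 8 * exp 1 * / t ^ 3 * exp (- (beta * t))).
  { apply Rmult_le_pos. apply Rmult_le_pos. lra. left; apply Rinv_0_lt_compat; auto. lra. }
  eapply Rle_trans. 2: apply (Rmult_le_compat_l _ _ _ hc hL).
  right. replace (t - t / 2) with (t / 2) by field.
  replace (exp (- (beta * t))) with (/ exp (beta * t)) by (rewrite exp_Ropp; auto).
  field. split; lra.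
Qed.

Lemma ratio_use P Q k : P < 0 -> Q / P <= k -> - Q <= k * (- P).
Proof.
  intros hP h. assert (Q = Q / P * P) by (field; lra).
  assert (k * (- P) >= Q / P * (- P)) by (apply Rle_ge; apply Rmult_le_compat_r; lra). lra.
Qed.

Lemma part_ii mu beta phie phie1 phie2 a b : Setup mu beta phie phie1 phie2 a b ->
  forall (theta Lambda1 : R) (Lambda2 : option R) (gamma : R),
     0 < theta -> 0 <= Lambda1 -> lt_ext Lambda1 Lambda2 -> 0 < gamma ->
     (forall x lam, 1 <= x -> Lambda1 < lam -> lt_ext lam Lambda2 ->
        phie2 (lam * x - beta) / phie2 (lam - beta) <= theta * Rpower x (- gamma)) ->
     exists c2 delta, 0 < c2 /\ 0 < delta < 1 /\
       forall t,
         (match Lambda2 with Some L2 => delta / L2 < t | None => 0 < t end) ->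
         (Lambda1 = 0 \/ t < delta / Lambda1) ->
         mu t >= - c2 * / (t ^ 3) * phie2 (/ t - beta) * exp (- (beta * t)).
Proof.
  intros HS theta L1 L2 gamma hth hL1 hL12 hg Hrat.
  pose proof HS as [[Hmon [Hmu _]] _].
  set (x := 2 + exp (ln (18 * theta) / gamma)).
  pose proof (exp_pos (ln (18 * theta) / gamma)).
  assert (hx : 2 < x) by (unfold x; lra).
  set (delta := / (x - 1)).
  assert (hd : 0 < delta < 1).
  { unfold delta. split. apply Rinv_0_lt_compat; lra.
    replace 1 with (/ 1) at 2 by field. apply Rinv_lt_contravar; lra. }
  assert (hRx : theta * Rpower x (- gamma) <= / 18).
  { unfold Rpower. assert (ln (exp (ln (18 * theta) / gamma)) < ln x) by (apply ln_increasing; [apply exp_pos|unfold x; lra]).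
    rewrite ln_exp in H0.
    assert (- gamma * ln x <= - ln (18 * theta)).
    { assert (ln (18 * theta) < gamma * ln x).
      { replace (ln (18 * theta)) with (gamma * (ln (18 * theta) / gamma)) by (field; lra).
        apply Rmult_lt_compat_l; lra. }
      lra. }
    apply Rle_trans with (theta * exp (- ln (18 * theta))).
    apply Rmult_le_compat_l. lra. apply exp_le; auto.
    rewrite exp_Ropp, exp_ln by lra. right; field; lra. }
  assert (hRx1 : theta * Rpower (x - 1) (- gamma) <= theta).
  { unfold Rpower. rewrite <- (Rmult_1_r theta) at 2. apply Rmult_le_compat_l. lra.
    assert (0 <= ln (x - 1)). { rewrite <- ln_1. destruct (Req_dec (x - 1) 1) as [e|e]. rewrite e; lra.
      left; apply ln_increasing; lra. }
    apply Rle_trans with (exp 0); [apply exp_le | rewrite exp_0; lra].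
    assert (0 <= gamma * ln (x - 1)) by (apply Rmult_le_pos; lra). lra. }
  exists (delta ^ 3 / (52 * theta)), delta. split.
  { apply Rdiv_lt_0_compat. apply pow_lt; lra. lra. }
  split; auto.
  intros t ht1 ht2.
  assert (ht : 0 < t).
  { destruct L2 as [L2|]; auto. simpl in hL12. assert (0 < delta / L2) by (apply Rdiv_lt_0_compat; lra). lra. }
  set (lam := delta / t).
  assert (hlam : 0 < lam) by (unfold lam; apply Rdiv_lt_0_compat; lra).
  assert (hlam1 : L1 < lam).
  { destruct (Req_dec L1 0) as [e|e]. lra. destruct ht2 as [ht2|ht2]. contradiction.
    unfold lam. assert (0 < L1) by lra.
    apply (Rmult_lt_reg_r t); auto. unfold Rdiv. rewrite Rmult_assoc, Rinv_l, Rmult_1_r by lra.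
    apply (Rmult_lt_reg_r (/ L1)). apply Rinv_0_lt_compat; lra.
    replace (L1 * t * / L1) with t by (field; lra). exact ht2. }
  assert (hlam2 : lt_ext lam L2).
  { destruct L2 as [L2|]; simpl; auto. simpl in hL12.
    unfold lam. apply (Rmult_lt_reg_r t); auto. unfold Rdiv. rewrite Rmult_assoc, Rinv_l, Rmult_1_r by lra.
    apply (Rmult_lt_reg_r (/ L2)). apply Rinv_0_lt_compat; lra.
    replace (L2 * t * / L2) with t by (field; lra). exact ht1. }
  pose proof (upperU mu beta phie phie1 phie2 a b lam x t HS hlam ltac:(lra) ht) as hU.
  assert (e1 : lam * (x - 1) * t + 1 = 2) by (unfold lam, delta; field; lra).
  rewrite e1 in hU.
  assert (hGl : 0 < - phie2 (lam - beta)) by (apply (G_pos mu beta phie phie1 phie2 a b); auto; lra).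
  assert (hGx : - phie2 (lam * x - beta) <= theta * Rpower x (- gamma) * (- phie2 (lam - beta))).
  { apply ratio_use. lra. apply Hrat; auto; lra. }
  assert (he2 : exp 2 <= 9).
  { replace 2 with (1 + 1) by ring. rewrite exp_plus. pose proof exp_le_3. pose proof (exp_pos 1). nra. }
  assert (hb1 : exp 2 * (- phie2 (lam * x - beta)) <= / 2 * (- phie2 (lam - beta))).
  { eapply Rle_trans. apply Rmult_le_compat_l. left; apply exp_pos. exact hGx.
    assert (0 <= theta * Rpower x (- gamma)) by (unfold Rpower; pose proof (exp_pos (- gamma * ln x)); nra).
    assert (exp 2 * (theta * Rpower x (- gamma)) <= / 2) by (pose proof (exp_pos 2); nra).
    nra. }
  set (nu := exp (beta * t) * mu t).
  assert (hnu : 0 < nu) by (unfold nu; pose proof (exp_pos (beta * t)); pose proof (Hmu t ht); nra).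
  assert (hpoly : 2 * t ^ 2 / lam + 8 * t / lam ^ 2 + 16 / lam ^ 3 <= 26 * t ^ 3 / delta ^ 3).
  { unfold lam. replace (2 * t ^ 2 / (delta / t) + 8 * t / (delta / t) ^ 2 + 16 / (delta / t) ^ 3)
      with ((2 * delta ^ 2 + 8 * delta + 16) * t ^ 3 / delta ^ 3) by (field; lra).
    unfold Rdiv. apply Rmult_le_compat_r. left; apply Rinv_0_lt_compat, pow_lt; lra.
    apply Rmult_le_compat_r. left; apply pow_lt; lra. nra. }
  assert (hGlam : - phie2 (lam - beta) <= 52 * nu * t ^ 3 / delta ^ 3).
  { fold nu in hU. assert (nu * (2 * t ^ 2 / lam + 8 * t / lam ^ 2 + 16 / lam ^ 3) <= nu * (26 * t ^ 3 / delta ^ 3))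
      by (apply Rmult_le_compat_l; lra).
    replace (52 * nu * t ^ 3 / delta ^ 3) with (2 * (nu * (26 * t ^ 3 / delta ^ 3))) by (field; lra). lra. }
  assert (e2 : lam * (x - 1) = / t) by (unfold lam, delta; field; lra).
  assert (hG1 : - phie2 (/ t - beta) <= theta * (- phie2 (lam - beta))).
  { rewrite <- e2. eapply Rle_trans. apply (ratio_use (phie2 (lam - beta))). lra. apply Hrat; auto; lra.
    apply Rmult_le_compat_r; lra. }
  set (G := - phie2 (/ t - beta)) in *.
  assert (hGt : G <= theta * (52 * nu * t ^ 3 / delta ^ 3)) by (eapply Rle_trans; [exact hG1|apply Rmult_le_compat_l; lra]).
  assert (t3 : 0 < t ^ 3) by (apply pow_lt; auto).
  assert (d3 : 0 < delta ^ 3) by (apply pow_lt; lra).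
  pose proof (exp_pos (- (beta * t))).
  assert (enu : mu t = nu * exp (- (beta * t))).
  { unfold nu. rewrite Rmult_comm, <- Rmult_assoc, <- exp_plus. replace (- (beta * t) + beta * t) with 0 by ring. rewrite exp_0; ring. }
  apply Rle_ge. rewrite enu.
  replace (- (delta ^ 3 / (52 * theta)) * / t ^ 3 * phie2 (/ t - beta) * exp (- (beta * t))) with
    ((delta ^ 3 / (52 * theta) * / t ^ 3 * G) * exp (- (beta * t))) by (unfold G; ring).
  apply Rmult_le_compat_r. lra.
  apply Rle_trans with (delta ^ 3 / (52 * theta) * / t ^ 3 * (theta * (52 * nu * t ^ 3 / delta ^ 3))).
  apply Rmult_le_compat_l; auto. apply Rmult_le_pos. apply Rdiv_le_0_compat; lra. left; apply Rinv_0_lt_compat; auto.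
  right. field. repeat split; lra.
Qed.

Theorem corollary4p1
  (phi : R -> R) (D : nat -> R -> R) (beta : R) (mu : R -> R)
  (phie phie1 phie2 : R -> R) :
  bernstein phi ->
  deriv_seq phi D ->
  beta_spec D beta ->
  (* the Levy measure of phi has density mu : (0,oo) -> (0,oo) *)
  (forall t, 0 < t -> 0 < mu t) ->
  (exists l, improper_int0inf (fun t => Rmin 1 t * mu t) l) ->
  (exists a b, 0 <= a /\ 0 <= b /\
     forall lam, 0 < lam ->
       improper_int0inf (fun t => (1 - exp (- (lam * t))) * mu t)
         (phi lam - a - b * lam)) ->
  (* t |-> e^{beta t} mu(t) is non-increasing *)
  (forall s t, 0 < s -> s <= t -> exp (beta * t) * mu t <= exp (beta * s) * mu s) ->
  (* phie is the extension phi_e, phie1 = phi_e', phie2 = phi_e'' on (-beta,oo) *)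
  extension phi D beta phie ->
  (forall x, - beta < x -> derivable_pt_lim phie x (phie1 x)) ->
  (forall x, - beta < x -> derivable_pt_lim phie1 x (phie2 x)) ->
  (* (i) *)
  (exists c1, 0 < c1 /\ forall t, 0 < t ->
     mu t <= - c1 * / (t ^ 3) * phie2 (/ t - beta) * exp (- (beta * t)))
  /\
  (* (ii) ; Lambda2 = None encodes +oo *)
  (forall (theta Lambda1 : R) (Lambda2 : option R) (gamma : R),
     0 < theta -> 0 <= Lambda1 -> lt_ext Lambda1 Lambda2 -> 0 < gamma ->
     (forall x lam, 1 <= x -> Lambda1 < lam -> lt_ext lam Lambda2 ->
        phie2 (lam * x - beta) / phie2 (lam - beta) <= theta * Rpower x (- gamma)) ->
     exists c2 delta, 0 < c2 /\ 0 < delta < 1 /\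
       forall t,
         (match Lambda2 with Some L2 => delta / L2 < t | None => 0 < t end) ->
         (Lambda1 = 0 \/ t < delta / Lambda1) ->
         mu t >= - c2 * / (t ^ 3) * phie2 (/ t - beta) * exp (- (beta * t))).
Proof.
  intros Hbern HD Hbeta Hmu Hl Hab Hmon Hext Hd1 Hd2.
  destruct Hl as [l0 Hl0]. apply impr_iff in Hl0.
  destruct Hab as [a [b [ha [hb Hrep]]]].
  assert (HM : HypM mu beta) by (split; [auto|split; [auto|exists l0; auto]]).
  assert (Hrep' : forall lam, 0 < lam -> impr (fun t => (1 - exp (- (lam * t))) * mu t) (phi lam - a - b * lam)).
  { intros lam hl. apply impr_iff. auto. }
  assert (HS : Setup mu beta phie phie1 phie2 a b).
  { split; auto. split. intros z hz. eapply rep_all; eauto. split; auto. }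
  split.
  - apply (part_i mu beta phie phie1 phie2 a b HS).
  - apply (part_ii mu beta phie phie1 phie2 a b HS).
Qed.
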